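(* In every run of the algorithm described in the context in which at most $t$ processes crash, if a process does not crash during an invocation of $\mathsf{read}()$, then this invocation terminates.
   Context: Model. There are $n$ asynchronous processes $p_1,\dots,p_n$, of which up to $t<n/2$ may crash; a process runs its algorithm correctly until it crashes, and a process that never crashes is correct. Each ordered pair of processes is linked by a reliable (no loss, corruption, duplication or creation; every message sent to a correct process is eventually received), asynchronous, not necessarily FIFO channel. $p_w$ is the single writer, invoking writes sequentially; $v_0$ is the initial value. Each process invokes its operations sequentially. Messages: $\textsc{write}(b,v)$ with $b\in\{0,1\}$, which stands for the two types $\textsc{write0}(v)$ and $\textsc{write1}(v)$; $\textsc{read}()$; $\textsc{proceed}()$. Variables of $p_i$. These are: $history_i$ with $history_i[0]=v_0$; $w\_sync_i[1..n]$, initially all $0$; $r\_sync_i[1..n]$, initially all $0$. $\mathsf{write}(v)$ by $p_w$: $wsn\gets w\_sync_w[w]+1$; $w\_sync_w[w]\gets wsn$; $history_w[wsn]\gets v$. Send $\textsc{write}(wsn\bmod 2,v)$ to each $p_j$ with $w\_sync_w[j]=wsn-1$. Wait until at least $n-t$ indices $j$ have $w\_sync_w[j]=wsn$. Return. $\mathsf{read}()$ by $p_i$ (the writer may instead directly return $history_w[w\_sync_w[w]]$): $r\_sync_i[i]\gets r\_sync_i[i]+1$ and call the new value $rsn$. Send $\textsc{read}()$ to all $p_j$ with $j\ne i$. Wait until at least $n-t$ indices $j$ have $r\_sync_i[j]=rsn$. Let $sn\gets w\_sync_i[i]$. Wait until at least $n-t$ indices $j$ have $w\_sync_i[j]\ge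 sn$. Return $history_i[sn]$. On receipt of $\textsc{write}(b,v)$ from $p_j$ at $p_i$: Wait until $b=(w\_sync_i[j]+1)\bmod 2$. Let $wsn\gets w\_sync_i[j]+1$. If $wsn=w\_sync_i[i]+1$, then set $w\_sync_i[i]\gets wsn$ and $history_i[wsn]\gets v$, and send $\textsc{write}(wsn\bmod 2,v)$ to each $p_\ell$ with $w\_sync_i[\ell]=wsn-1$. Else, if $wsn<w\_sync_i[i]$, send $\textsc{write}((wsn+1)\bmod 2,history_i[wsn+1])$ to $p_j$. Finally set $w\_sync_i[j]\gets wsn$. On receipt of $\textsc{read}()$ from $p_j$ at $p_i$: Let $sn\gets w\_sync_i[i]$; wait until $w\_sync_i[j]\ge sn$; send $\textsc{proceed}()$ to $p_j$. On receipt of $\textsc{proceed}()$ from $p_j$ at $p_i$: $r\_sync_i[j]\gets r\_sync_i[j]+1$. Message handlers run concurrently; a waiting handler does not block the reception of other messages. *)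

(* Defs.v *)
From mathcomp Require Import all_boot.
From Stdlib Require List.

Set Implicit Arguments.
Unset Strict Implicit.
Unset Printing Implicit Defensive.

Section Algo.

Variables (V : Type) (n : nat).

(* Message bodies: WRITE(b,v) (b = 0/1 stored as a nat), READ(), PROCEED(). *)
Inductive body := MWrite of nat & V | MRead | MProceed.

(* A message in transit, with a unique identifier (m_id, m_dst). *)
Record msg := Msg { m_id : nat; m_src : 'I_n; m_dst : 'I_n; m_body : body }.

(* A received message whose handler has not completed yet (it may be waiting).
   For READ() the value sn := w_sync_i[i] is fixed at receipt time. *)
Inductive hkind := HWrite of nat & V | HRead of nat | HProceed.
Record handler := Handler { h_id : nat; h_owner : 'I_n; h_from : 'I_n; h_kind : hkind }.

Inductive opstate :=
  | Idle
  | WWait of nat        (* write(v) waiting, with its wsn *)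
  | RWait1 of nat       (* read() in its first wait, with its rsn *)
  | RWait2 of nat.      (* read() in its second wait, with its sn *)

Record lstate := LState {
  history : nat -> V;
  w_sync : 'I_n -> nat;
  r_sync : 'I_n -> nat;
  op : opstate }.

Record config := Config {
  loc : 'I_n -> lstate;
  crashed : 'I_n -> bool;
  transit : seq msg;
  pending : seq handler;
  fresh : nat }.

Definition upd (A : Type) (f : 'I_n -> A) (i : 'I_n) (x : A) : 'I_n -> A :=
  fun j => if j == i then x else f j.

Definition updh (h : nat -> V) (k : nat) (x : V) : nat -> V :=
  fun l => if l == k then x else h l.

Definition kind_of (ls : lstate) (i : 'I_n) (b : body) : hkind :=
  match b with
  | MWrite bit v => HWrite bit v
  | MRead => HRead (w_sync ls i)
  | MProceed => HProceed
  end.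

(* Body of the WRITE(b,v)-handler at p_i for a message from p_j, once its wait
   condition holds: new local state and messages sent (destination, body). *)
Definition exec_write (ls : lstate) (i j : 'I_n) (v : V) : lstate * seq ('I_n * body) :=
  let wsn := (w_sync ls j).+1 in
  if wsn == (w_sync ls i).+1 then
    let ws1 := upd (w_sync ls) i wsn in
    (LState (updh (history ls) wsn v) (upd ws1 j wsn) (r_sync ls) (op ls),
     [seq (l, MWrite (wsn %% 2) v) | l <- enum 'I_n & ws1 l == wsn.-1])
  else if wsn < w_sync ls i then
    (LState (history ls) (upd (w_sync ls) j wsn) (r_sync ls) (op ls),
     [:: (j, MWrite (wsn.+1 %% 2) (history ls wsn.+1))])
  else
    (LState (history ls) (upd (w_sync ls) j wsn) (r_sync ls) (op ls), [::]).

Variables (t : nat) (w : 'I_n).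

(* One atomic local action of process i in configuration c: new local state of i,
   new transit list, new pending list, and the list of messages it sends. *)
Inductive act (c : config) : 'I_n -> lstate -> seq msg -> seq handler ->
                              seq ('I_n * body) -> Prop :=
  | A_invoke_write (v : V) :
      op (loc c w) = Idle ->
      let ls := loc c w in
      let wsn := (w_sync ls w).+1 in
      let ws' := upd (w_sync ls) w wsn in
      act c w (LState (updh (history ls) wsn v) ws' (r_sync ls) (WWait wsn))
          (transit c) (pending c)
          [seq (j, MWrite (wsn %% 2) v) | j <- enum 'I_n & ws' j == wsn.-1]
  | A_return_write (i : 'I_n) (wsn : nat) :
      let ls := loc c i in
      op ls = WWait wsn ->
      n - t <= #|[set j | w_sync ls j == wsn]| ->
      act c i (LState (history ls) (w_sync ls) (r_sync ls) Idle)
          (transit c) (pending c) [::]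
  | A_invoke_read (i : 'I_n) :
      let ls := loc c i in
      op ls = Idle ->
      let rsn := (r_sync ls i).+1 in
      act c i (LState (history ls) (w_sync ls) (upd (r_sync ls) i rsn) (RWait1 rsn))
          (transit c) (pending c) [seq (j, MRead) | j <- enum 'I_n & j != i]
  | A_read_phase2 (i : 'I_n) (rsn : nat) :
      let ls := loc c i in
      op ls = RWait1 rsn ->
      n - t <= #|[set j | r_sync ls j == rsn]| ->
      act c i (LState (history ls) (w_sync ls) (r_sync ls) (RWait2 (w_sync ls i)))
          (transit c) (pending c) [::]
  | A_return_read (i : 'I_n) (sn : nat) :
      let ls := loc c i in
      op ls = RWait2 sn ->
      n - t <= #|[set j | sn <= w_sync ls j]| ->
      act c i (LState (history ls) (w_sync ls) (r_sync ls) Idle)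
          (transit c) (pending c) [::]
  | A_receive (i : 'I_n) (m : msg) (l1 l2 : seq msg) :
      transit c = l1 ++ m :: l2 ->
      m_dst m = i ->
      act c i (loc c i) (l1 ++ l2)
          (pending c ++ [:: Handler (m_id m) i (m_src m) (kind_of (loc c i) i (m_body m))])
          [::]
  | A_exec_write (i j : 'I_n) (hid b : nat) (v : V) (l1 l2 : seq handler) :
      pending c = l1 ++ Handler hid i j (HWrite b v) :: l2 ->
      b = (w_sync (loc c i) j).+1 %% 2 ->
      act c i (exec_write (loc c i) i j v).1 (transit c) (l1 ++ l2)
          (exec_write (loc c i) i j v).2
  | A_exec_read (i j : 'I_n) (hid sn : nat) (l1 l2 : seq handler) :
      pending c = l1 ++ Handler hid i j (HRead sn) :: l2 ->
      sn <= w_sync (loc c i) j ->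
      act c i (loc c i) (transit c) (l1 ++ l2) [:: (j, MProceed)]
  | A_exec_proceed (i j : 'I_n) (hid : nat) (l1 l2 : seq handler) :
      pending c = l1 ++ Handler hid i j HProceed :: l2 ->
      let ls := loc c i in
      act c i (LState (history ls) (w_sync ls) (upd (r_sync ls) j (r_sync ls j).+1) (op ls))
          (transit c) (l1 ++ l2) [::].

Definition mk_out (c : config) (i : 'I_n) (out : seq ('I_n * body)) : seq msg :=
  [seq Msg (fresh c) i d.1 d.2 | d <- out].

(* Global steps: a non-crashed process performs an action; or it performs an
   action during which it crashes (only an arbitrary subset of its messages is
   sent); or it simply crashes. *)
Inductive step (c c' : config) : Prop :=
  | S_act (i : 'I_n) ls' tr' pd' out :
      ~~ crashed c i -> act c i ls' tr' pd' out ->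
      c' = Config (upd (loc c) i ls') (crashed c) (tr' ++ mk_out c i out) pd' (fresh c).+1 ->
      step c c'
  | S_act_crash (i : 'I_n) ls' tr' pd' out (msk : bitseq) :
      ~~ crashed c i -> act c i ls' tr' pd' out ->
      c' = Config (upd (loc c) i ls') (upd (crashed c) i true)
                  (tr' ++ mk_out c i (mask msk out)) pd' (fresh c).+1 ->
      step c c'
  | S_crash (i : 'I_n) :
      ~~ crashed c i ->
      c' = Config (loc c) (upd (crashed c) i true) (transit c) (pending c) (fresh c) ->
      step c c'.

Variable v0 : V.

Definition init_config : config :=
  Config (fun _ => LState (fun _ => v0) (fun _ => 0) (fun _ => 0) Idle)
         (fun _ => false) [::] [::] 0.

Definition is_run (r : nat -> config) : Prop :=
  r 0 = init_config /\ forall k, step (r k) (r k.+1) \/ r k.+1 = r k.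

Definition correct (r : nat -> config) (i : 'I_n) : Prop :=
  forall k, ~~ crashed (r k) i.

Definition at_most_t_crash (r : nat -> config) : Prop :=
  forall k, #|[set i | crashed (r k) i]| <= t.

Definition op_enabled (ls : lstate) : bool :=
  match op ls with
  | Idle => false
  | WWait wsn => n - t <= #|[set j | w_sync ls j == wsn]|
  | RWait1 rsn => n - t <= #|[set j | r_sync ls j == rsn]|
  | RWait2 sn => n - t <= #|[set j | sn <= w_sync ls j]|
  end.

Definition h_enabled (c : config) (h : handler) : bool :=
  let ls := loc c (h_owner h) in
  match h_kind h with
  | HWrite b _ => b == (w_sync ls (h_from h)).+1 %% 2
  | HRead sn => sn <= w_sync ls (h_from h)
  | HProceed => true
  end.

(* Fairness: reliable channels (every message to a correct process is eventually
   received) and weak fairness of the local actions of correct processes. *)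
Definition fair (r : nat -> config) : Prop :=
  (forall k m, List.In m (transit (r k)) -> correct r (m_dst m) ->
     exists2 k', k <= k' & ~ List.In m (transit (r k'))) /\
  (forall k h, correct r (h_owner h) ->
     ~ (forall k', k <= k' -> List.In h (pending (r k')) /\ h_enabled (r k') h)) /\
  (forall k i, correct r i ->
     ~ (forall k', k <= k' -> op_enabled (loc (r k') i) /\
                              op (loc (r k'.+1) i) = op (loc (r k') i))).

End Algo.

(* Main.v *)
Require Import Defs.
From mathcomp Require Import all_boot.
From Stdlib Require Import Classical Lia FunctionalExtensionality.
From mathcomp Require Import zify.

Set Implicit Arguments.
Unset Strict Implicit.
Unset Printing Implicit Defensive.


Section S.
Variables (V : Type) (n t : nat) (w : 'I_n).
Local Notation config := (config V n).
Local Notation msg := (msg V n).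
Local Notation handler := (handler V n).
Local Notation act := (act t w).

Definition ws (c : config) (p q : 'I_n) := w_sync (loc c p) q.
Definition rs (c : config) (p q : 'I_n) := r_sync (loc c p) q.

Definition mbit (q p : 'I_n) (m : msg) : option nat :=
  if (m_src m == q) && (m_dst m == p) then
    (if m_body m is MWrite b _ then Some b else None) else None.
Definition hbit (q p : 'I_n) (h : handler) : option nat :=
  if (h_owner h == p) && (h_from h == q) then
    (if h_kind h is HWrite b _ then Some b else None) else None.
Definition chan (c : config) q p :=
  pmap (mbit q p) (transit c) ++ pmap (hbit q p) (pending c).
Definition Sq c q p := ws c p q + size (chan c q p).
Fixpoint expct (v k : nat) : seq nat :=
  if k is k'.+1 then (v.+1 %% 2) :: expct v.+1 k' else [::].

Lemma expct_rcons v k : expct v k.+1 = expct v k ++ [:: (v + k.+1) %% 2].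
Proof.
elim: k v => [|k IH] v; first by rewrite /= addn1.
by rewrite -[expct v k.+2]/(v.+1 %% 2 :: expct v.+1 k.+1) IH addSnnS.
Qed.

Lemma expct_size v k : size (expct v k) = k.
Proof. by elim: k v => //= k IH v; rewrite IH. Qed.

Definition isRead (i j : 'I_n) (m : msg) :=
  (m_src m == i) && (m_dst m == j) && (if m_body m is MRead then true else false).
Definition isProc (j i : 'I_n) (m : msg) :=
  (m_src m == j) && (m_dst m == i) && (if m_body m is MProceed then true else false).
Definition isHRead (j i : 'I_n) (h : handler) :=
  (h_owner h == j) && (h_from h == i) && (if h_kind h is HRead _ then true else false).
Definition isHProc (i j : 'I_n) (h : handler) :=
  (h_owner h == i) && (h_from h == j) && (if h_kind h is HProceed then true else false).
Definition Rtok c i j := rs c i j + count (isProc j i) (transit c) + count (isHProc i j) (pending c)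
   + count (isRead i j) (transit c) + count (isHRead j i) (pending c).

Record Inv (c : config) : Prop := {
  iNT : forall m, List.In m (transit c) -> m_src m != m_dst m;
  iNP : forall h, List.In h (pending c) -> h_owner h != h_from h;
  iV : forall p q, ws c p q <= ws c p p;
  iU : forall q p, q != p -> ~~ crashed c q -> Sq c q p <= ws c q q;
  iL : forall q p, q != p -> ~~ crashed c q -> ws c q p <= Sq c q p;
  iD : forall q p, q != p -> ~~ crashed c q -> ws c q p < ws c q q -> Sq c q p = (ws c q p).+1;
  iB : forall q p, q != p -> ~~ crashed c q -> perm_eq (chan c q p) (expct (ws c p q) (size (chan c q p)));
  iR : forall i j, i != j -> ~~ crashed c i -> ~~ crashed c j -> Rtok c i j = rs c i i;
  iHR : forall h (sn : nat), List.In h (pending c) -> h_kind h = @HRead V sn -> sn <= ws c (h_owner h) (h_owner h);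
  iO1 : forall i (rsn : nat), op (loc c i) = RWait1 rsn -> rs c i i = rsn;
  iO2 : forall i (sn : nat), op (loc c i) = RWait2 sn -> sn <= ws c i i }.

Definition nextc (c : config) i ls' tr' pd' out :=
  Config (upd (loc c) i ls') (crashed c) (tr' ++ mk_out c i out) pd' (fresh c).+1.

Lemma pmap_map (A B C : Type) (f : B -> option C) (g : A -> B) s :
  pmap f (map g s) = pmap (fun x => f (g x)) s.
Proof. by elim: s => //= a s ->. Qed.

Definition trshape (c : config) i (tr' : seq msg) :=
  tr' = transit c \/ exists l1 m l2, transit c = l1 ++ m :: l2 /\ tr' = l1 ++ l2 /\ m_dst m = i.
Definition pdshape (c : config) i (pd' : seq handler) :=
  pd' = pending c \/ (exists h, pd' = pending c ++ [:: h] /\ h_owner h = i) \/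
  exists l1 h l2, pending c = l1 ++ h :: l2 /\ pd' = l1 ++ l2 /\ h_owner h = i.

Lemma act_shape c i ls' tr' pd' out : act c i ls' tr' pd' out ->
  trshape c i tr' /\ pdshape c i pd'.
Proof.
case=> /=.
- by move=> *; split; left.
- by move=> *; split; left.
- by move=> *; split; left.
- by move=> *; split; left.
- by move=> *; split; left.
- move=> i0 m l1 l2 E D; split; first by right; exists l1, m, l2.
  by right; left; eexists; split.
- move=> i0 j hid b v l1 l2 E _; split; first by left.
  by right; right; exists l1, (Handler hid i0 j (HWrite b v)), l2.
- move=> i0 j hid sn l1 l2 E _; split; first by left.
  by right; right; exists l1, (Handler hid i0 j (HRead V sn)), l2.
- move=> i0 j hid l1 l2 E; split; first by left.
  by right; right; exists l1, (Handler hid i0 j (HProceed V)), l2.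
Qed.


Lemma count_split (T : Type) (P : pred T) l1 (m : T) l2 :
  count P (l1 ++ m :: l2) = count P (l1 ++ l2) + P m.
Proof. rewrite !count_cat /=; lia. Qed.

Lemma pmap_split (T U : Type) (f : T -> option U) l1 (m : T) l2 :
  f m = None -> pmap f (l1 ++ m :: l2) = pmap f (l1 ++ l2).
Proof. by move=> H; rewrite !pmap_cat /= H. Qed.

Lemma trshape_count c i tr' (P : pred msg) : trshape c i tr' ->
  (forall m, m_dst m = i -> ~~ P m) -> count P tr' = count P (transit c).
Proof.
case=> [->//|[l1 [m [l2 [E1 [E2 E3]]]]]] H.
by rewrite E1 E2 count_split (negbTE (H _ E3)) addn0.
Qed.

Lemma trshape_pmap c i tr' (U : Type) (f : msg -> option U) : trshape c i tr' ->
  (forall m, m_dst m = i -> f m = None) -> pmap f tr' = pmap f (transit c).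
Proof.
case=> [->//|[l1 [m [l2 [E1 [E2 E3]]]]]] H.
by rewrite E1 E2 pmap_split // H.
Qed.

Lemma pdshape_count c i pd' (P : pred handler) : pdshape c i pd' ->
  (forall h, h_owner h = i -> ~~ P h) -> count P pd' = count P (pending c).
Proof.
case=> [->//|[[h [E1 E2]]|[l1 [h [l2 [E1 [E2 E3]]]]]]] H.
  by rewrite E1 count_cat /= (negbTE (H _ E2)) !addn0.
by rewrite E1 E2 count_split (negbTE (H _ E3)) addn0.
Qed.

Lemma pdshape_pmap c i pd' (U : Type) (f : handler -> option U) : pdshape c i pd' ->
  (forall h, h_owner h = i -> f h = None) -> pmap f pd' = pmap f (pending c).
Proof.
case=> [->//|[[h [E1 E2]]|[l1 [h [l2 [E1 [E2 E3]]]]]]] H.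
  by rewrite E1 pmap_cat /= H // cats0.
by rewrite E1 E2 pmap_split // H.
Qed.

Lemma mk_out_count c i out (P : pred msg) :
  count P (mk_out c i out) = count (fun d => P (Msg (fresh c) i d.1 d.2)) out.
Proof. by rewrite /mk_out count_map. Qed.

Lemma mk_out_pmap c i out (U : Type) (f : msg -> option U) :
  pmap f (mk_out c i out) = pmap (fun d => f (Msg (fresh c) i d.1 d.2)) out.
Proof. by rewrite /mk_out pmap_map. Qed.

Definition obits (p : 'I_n) (out : seq ('I_n * body V)) :=
  pmap (fun d => if d.1 == p then (if d.2 is MWrite b _ then Some b else None) else None) out.

Lemma ws_next_other c i ls' tr' pd' out p q : p != i ->
  ws (nextc c i ls' tr' pd' out) p q = ws c p q.
Proof. by move=> H; rewrite /ws /nextc /upd /= (negbTE H). Qed.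
Lemma rs_next_other c i ls' tr' pd' out p q : p != i ->
  rs (nextc c i ls' tr' pd' out) p q = rs c p q.
Proof. by move=> H; rewrite /rs /nextc /upd /= (negbTE H). Qed.
Lemma ws_next_self c i ls' tr' pd' out q :
  ws (nextc c i ls' tr' pd' out) i q = w_sync ls' q.
Proof. by rewrite /ws /nextc /upd /= eqxx. Qed.
Lemma rs_next_self c i ls' tr' pd' out q :
  rs (nextc c i ls' tr' pd' out) i q = r_sync ls' q.
Proof. by rewrite /rs /nextc /upd /= eqxx. Qed.
Lemma loc_next_self c i ls' tr' pd' out :
  loc (nextc c i ls' tr' pd' out) i = ls'.
Proof. by rewrite /nextc /upd /= eqxx. Qed.
Lemma loc_next_other c i ls' tr' pd' out p : p != i ->
  loc (nextc c i ls' tr' pd' out) p = loc c p.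
Proof. by move=> H; rewrite /nextc /upd /= (negbTE H). Qed.

Lemma chan_other c i ls' tr' pd' out q p : act c i ls' tr' pd' out ->
  p != i -> q != i -> chan (nextc c i ls' tr' pd' out) q p = chan c q p.
Proof.
move=> /act_shape [Ht Hp] pi qi; rewrite /chan /= pmap_cat mk_out_pmap.
have ip : (i == p) = false by rewrite eq_sym (negbTE pi).
have iq : (i == q) = false by rewrite eq_sym (negbTE qi).
rewrite (trshape_pmap Ht); last by move=> m E; rewrite /mbit E ip andbF.
rewrite (pdshape_pmap Hp); last by move=> h E; rewrite /hbit E ip.
congr (_ ++ _); rewrite -[RHS]cats0; congr (_ ++ _).
by elim: out => //= d out ->; rewrite /mbit /= iq.
Qed.

Lemma chan_send c i ls' tr' pd' out p : act c i ls' tr' pd' out ->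
  p != i -> perm_eq (chan (nextc c i ls' tr' pd' out) i p) (chan c i p ++ obits p out).
Proof.
move=> /act_shape [Ht Hp] pi; rewrite /chan /= pmap_cat mk_out_pmap.
have ip : (i == p) = false by rewrite eq_sym (negbTE pi).
rewrite (trshape_pmap Ht); last by move=> m E; rewrite /mbit E ip andbF.
rewrite (pdshape_pmap Hp); last by move=> h E; rewrite /hbit E ip.
have -> : pmap (fun d => mbit i p (Msg (fresh c) i d.1 d.2)) out = obits p out.
  by rewrite /obits; elim: out => //= d out ->; rewrite /mbit /= eqxx.
rewrite -!catA; apply: perm_cat; first exact: perm_refl.
by rewrite perm_catC.
Qed.

Lemma Rtok_other c i ls' tr' pd' out a b : act c i ls' tr' pd' out ->
  a != i -> b != i -> Rtok (nextc c i ls' tr' pd' out) a b = Rtok c a b.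
Proof.
move=> /act_shape [Ht Hp] ai bi; rewrite /Rtok rs_next_other //= !count_cat !mk_out_count.
have ia : (i == a) = false by rewrite eq_sym (negbTE ai).
have ib : (i == b) = false by rewrite eq_sym (negbTE bi).
rewrite !(trshape_count Ht); try by move=> m E; rewrite /isProc /isRead E ?ia ?ib !andbF.
rewrite !(pdshape_count Hp); try by move=> h E; rewrite /isHProc /isHRead E ?ia ?ib.
have E1 : forall (P : 'I_n -> pred msg) x, x != i -> (forall m, P x m -> m_src m == x) ->
  count (fun d => P x (Msg (fresh c) i d.1 d.2)) out = 0.
  move=> P x xi HP; elim: out => //= d out ->.
  case E: (P x _) => //; move: (HP _ E) => /= /eqP E'.
  by move: xi; rewrite E' eqxx.
rewrite (E1 (fun x => isProc x a) b bi); last by move=> m /andP[/andP[]].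
rewrite (E1 (fun x => isRead x b) a ai); last by move=> m /andP[/andP[]].
by rewrite !addn0.
Qed.


Lemma tr_in c i tr' m : trshape c i tr' -> List.In m tr' -> List.In m (transit c).
Proof.
case=> [->//|[l1 [m0 [l2 [E1 [E2 E3]]]]]] H1; rewrite E1; rewrite E2 in H1.
apply: List.in_or_app; case: (List.in_app_or _ _ _ H1) => H2; auto.
by right; right.
Qed.

Lemma pd_in c i pd' h : pdshape c i pd' -> List.In h pd' ->
  List.In h (pending c) \/ (pd' = pending c ++ [:: h] /\ h_owner h = i).
Proof.
case=> [->|[[h0 [E1 E2]]|[l1 [h0 [l2 [E1 [E2 E3]]]]]]]; [by left| |].
  rewrite E1 => H; case: (List.in_app_or _ _ _ H) => [H2|[H2|[]]]; [by left|by right; rewrite -H2].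
move=> H; rewrite E2 in H; rewrite E1; left; apply: List.in_or_app; case: (List.in_app_or _ _ _ H) => H2; auto.
by right; right.
Qed.

Lemma in_mk_out c i out m : List.In m (mk_out c i out) ->
  m_src m = i /\ exists2 d : 'I_n * body V, List.In d out & m_dst m = d.1 /\ m_body m = d.2.
Proof.
rewrite /mk_out; elim: out => //= d out IH [<-|/IH [E [d' H1 H2]]].
  by split=> //; exists d; auto.
by split=> //; exists d'; auto.
Qed.

Lemma inv_local c i ls' : Inv c ->
  w_sync ls' = w_sync (loc c i) -> r_sync ls' = r_sync (loc c i) ->
  (forall rsn, op ls' = RWait1 rsn -> rs c i i = rsn) ->
  (forall sn, op ls' = RWait2 sn -> sn <= ws c i i) ->
  Inv (nextc c i ls' (transit c) (pending c) [::]).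
Proof.
move=> [] NT NP IV IU IL ID IB IR IHR O1 O2 Ew Er H1 H2.
have Ews : ws (nextc c i ls' (transit c) (pending c) [::]) = ws c.
  apply: functional_extensionality => p; apply: functional_extensionality => q; rewrite /ws /nextc /upd /=.
  by case: eqP => // ->; rewrite Ew.
have Ers : rs (nextc c i ls' (transit c) (pending c) [::]) = rs c.
  apply: functional_extensionality => p; apply: functional_extensionality => q; rewrite /rs /nextc /upd /=.
  by case: eqP => // ->; rewrite Er.
have Ech : chan (nextc c i ls' (transit c) (pending c) [::]) = chan c.
  by rewrite /chan /= cats0.
have ESq : Sq (nextc c i ls' (transit c) (pending c) [::]) = Sq c.
  by rewrite /Sq Ews Ech.
have ER : Rtok (nextc c i ls' (transit c) (pending c) [::]) = Rtok c.
  by rewrite /Rtok Ers /= cats0.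
split; rewrite ?Ews ?Ers ?Ech ?ESq ?ER /= ?cats0 //.
- move=> j rsn; rewrite /nextc /upd /=; case: eqP => [->|_]; [exact: H1|exact: O1].
- move=> j sn; rewrite /nextc /upd /=; case: eqP => [->|_]; [exact: H2|exact: O2].
Qed.


Lemma upd_same_loc c i tr' pd' out : loc (nextc c i (loc c i) tr' pd' out) = loc c.
Proof.
apply: functional_extensionality => j; rewrite /nextc /upd /=.
by case: eqP => // ->.
Qed.

Lemma inv_receive c i m l1 l2 : Inv c -> transit c = l1 ++ m :: l2 -> m_dst m = i ->
  Inv (nextc c i (loc c i) (l1 ++ l2)
     (pending c ++ [:: Handler (m_id m) i (m_src m) (kind_of (loc c i) i (m_body m))]) [::]).
Proof.
move=> [] NT NP IV IU IL ID IB IR IHR O1 O2 Et Ed.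
set h := Handler _ _ _ _.
set c' := nextc _ _ _ _ _ _.
have Hloc : loc c' = loc c by rewrite upd_same_loc.
have Ews : ws c' = ws c by rewrite /ws Hloc.
have Ers : rs c' = rs c by rewrite /rs Hloc.
have Hm : List.In m (transit c) by rewrite Et; apply: List.in_or_app; right; left.
have Hsd : m_src m != i by rewrite -Ed; exact: NT.
have Ech : forall q p, perm_eq (chan c' q p) (chan c q p).
  move=> q p; rewrite /chan /= cats0 Et !pmap_cat /=.
  have -> : hbit q p h = mbit q p m.
    by rewrite /hbit /mbit /= Ed andbC; case: (m_body m).
  case: (mbit q p m) => [b|] /=; rewrite ?cats0 //.
  apply/permP => x; rewrite !count_cat /=; lia.
have Esz : forall q p, size (chan c' q p) = size (chan c q p).
  by move=> q p; apply: perm_size.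
have ESq : forall q p, Sq c' q p = Sq c q p by move=> q p; rewrite /Sq Ews Esz.
have Ecr : crashed c' = crashed c by [].
split; rewrite ?Ews ?Ers ?ESq ?Ecr.
- move=> m0 /=; rewrite cats0 => H; apply: NT; rewrite Et.
  apply: List.in_or_app; case: (List.in_app_or _ _ _ H) => H2; auto; by right; right.
- move=> h0 /= H; case: (List.in_app_or _ _ _ H) => [|[<-|[]]]; first exact: NP.
  by rewrite /h /= eq_sym.
- exact: IV.
- by move=> q p qp cq; rewrite ESq; apply: IU.
- by move=> q p qp cq; rewrite ESq; apply: IL.
- by move=> q p qp cq; rewrite ESq; apply: ID.
- move=> q p qp cq; rewrite Esz; apply: perm_trans (IB _ _ qp cq); exact: Ech.
- move=> a b ab ca cb; rewrite -(IR a b ab ca cb) /Rtok Ers /= cats0 Et !count_split !count_cat /=.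
  have E1 : isRead a b m = isHRead b a h.
    by rewrite /isRead /isHRead /= Ed [(i == b) && _]andbC; case: (m_body m).
  have E2 : isProc b a m = isHProc a b h.
    by rewrite /isProc /isHProc /= Ed [(i == a) && _]andbC; case: (m_body m).
  rewrite E1 E2; lia.
- move=> h0 sn /= H; case: (List.in_app_or _ _ _ H) => [H2|[<-|[]]]; first exact: IHR.
  rewrite /h /=; case: (m_body m) => [b v||] //= [] <-; by rewrite /ws.
- by move=> j rsn; rewrite Hloc; exact: O1.
- by move=> j sn; rewrite Hloc; exact: O2.
Qed.


Lemma count_enum1 (P : pred 'I_n) b :
  count (fun j => (j == b) && P j) (enum 'I_n) = P b.
Proof.
case Pb: (P b).
  rewrite (eq_count (a2 := pred1 b)); last first.
    by move=> j /=; case: eqP => // ->; rewrite Pb.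
  by rewrite count_uniq_mem ?enum_uniq // mem_enum.
rewrite (eq_count (a2 := pred0)) ?count_pred0 //.
by move=> j /=; case: eqP => // ->; rewrite Pb.
Qed.

Lemma inv_exec_read c i j hid sn l1 l2 : Inv c ->
  pending c = l1 ++ Handler hid i j (HRead V sn) :: l2 ->
  Inv (nextc c i (loc c i) (transit c) (l1 ++ l2) [:: (j, MProceed V)]).
Proof.
move=> [] NT NP IV IU IL ID IB IR IHR O1 O2 Ep.
pose h := Handler hid i j (HRead V sn).
set c' := nextc _ _ _ _ _ _.
have Hloc : loc c' = loc c by rewrite upd_same_loc.
have Ews : ws c' = ws c by rewrite /ws Hloc.
have Ers : rs c' = rs c by rewrite /rs Hloc.
have Hh : List.In h (pending c) by rewrite Ep; apply: List.in_or_app; right; left.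
have ji : i != j := NP _ Hh.
have Ech : forall q p, chan c' q p = chan c q p.
  move=> q p; rewrite /chan /= Ep !pmap_cat /=.
  have -> : mbit q p (Msg (fresh c) i j (MProceed V)) = None by rewrite /mbit; case: ifP.
  have -> : hbit q p h = None by rewrite /hbit; case: ifP.
  by rewrite /= cats0.
have ESq : forall q p, Sq c' q p = Sq c q p by move=> q p; rewrite /Sq Ews Ech.
have Ecr : crashed c' = crashed c by [].
have Hsub : forall h0, List.In h0 (l1 ++ l2) -> List.In h0 (pending c).
  move=> h0 H; rewrite Ep; apply: List.in_or_app.
  case: (List.in_app_or _ _ _ H) => H2; auto; by right; right.
split; rewrite ?Ews ?Ers ?ESq ?Ecr.
- move=> m0 /= H; case: (List.in_app_or _ _ _ H) => [|[<-|[]]]; first exact: NT.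
  by [].
- by move=> h0 /= /Hsub; apply: NP.
- exact: IV.
- by move=> q p qp cq; rewrite ESq; apply: IU.
- by move=> q p qp cq; rewrite ESq; apply: IL.
- by move=> q p qp cq; rewrite ESq; apply: ID.
- by move=> q p qp cq; rewrite Ech; apply: IB.
- move=> a b ab ca cb; rewrite -(IR a b ab ca cb) /Rtok Ers /= Ep !count_split !count_cat /=.
  rewrite /isProc /isHRead /isRead /isHProc /= ?andbF ?andbT; lia.
- by move=> h0 sn0 /= /Hsub; apply: IHR.
- by move=> k rsn; rewrite Hloc; exact: O1.
- by move=> k sn0; rewrite Hloc; exact: O2.
Qed.

Lemma inv_exec_proceed c i j hid l1 l2 : Inv c ->
  pending c = l1 ++ Handler hid i j (HProceed V) :: l2 ->
  Inv (nextc c i (LState (history (loc c i)) (w_sync (loc c i))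
        (upd (r_sync (loc c i)) j (r_sync (loc c i) j).+1) (op (loc c i)))
        (transit c) (l1 ++ l2) [::]).
Proof.
move=> [] NT NP IV IU IL ID IB IR IHR O1 O2 Ep.
pose h := Handler hid i j (HProceed V).
set c' := nextc _ _ _ _ _ _.
have Hh : List.In h (pending c) by rewrite Ep; apply: List.in_or_app; right; left.
have ji : i != j := NP _ Hh.
have Ews : ws c' = ws c.
  apply: functional_extensionality => p; apply: functional_extensionality => q.
  by rewrite /ws /c' /nextc /upd /=; case: eqP => // ->.
have Ers : forall a b, rs c' a b = rs c a b + ((a == i) && (b == j)).
  move=> a b; rewrite /rs /c' /nextc /upd /=; case: (a =P i) => [->|] /=; last by rewrite addn0.
  by case: (b =P j) => [->|]; rewrite ?addn1 ?addn0.
have Ech : forall q p, chan c' q p = chan c q p.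
  move=> q p; rewrite /chan /= Ep !pmap_cat /=.
  have -> : hbit q p h = None by rewrite /hbit; case: ifP.
  by rewrite /= cats0.
have ESq : forall q p, Sq c' q p = Sq c q p by move=> q p; rewrite /Sq Ews Ech.
have Ecr : crashed c' = crashed c by [].
have Hsub : forall h0, List.In h0 (l1 ++ l2) -> List.In h0 (pending c).
  move=> h0 H; rewrite Ep; apply: List.in_or_app.
  case: (List.in_app_or _ _ _ H) => H2; auto; by right; right.
split; rewrite ?Ews ?ESq ?Ecr.
- by move=> m0 /=; rewrite cats0; apply: NT.
- by move=> h0 /= /Hsub; apply: NP.
- exact: IV.
- by move=> q p qp cq; rewrite ESq; apply: IU.
- by move=> q p qp cq; rewrite ESq; apply: IL.
- by move=> q p qp cq; rewrite ESq; apply: ID.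
- by move=> q p qp cq; rewrite Ech; apply: IB.
- move=> a b ab ca cb; rewrite [rs c' a a]Ers.
  have -> : (a == i) && (a == j) = false.
    by case: (a =P i) => // ->; rewrite (negbTE ji).
  rewrite addn0 -(IR a b ab ca cb) /Rtok Ers /= cats0 Ep !count_split.
  rewrite /isHProc /isHRead /= [(i == a)]eq_sym [(j == b)]eq_sym ?andbT ?andbF; lia.
- by move=> h0 sn0 /= /Hsub; apply: IHR.
- move=> k rsn; rewrite Ers; case: (k =P i) => [->|/eqP ki] /=.
    rewrite /c' /nextc /upd /= eqxx /= (negbTE ji) addn0; apply: O1.
  rewrite ?(negbTE ki) /= ?addn0 /c' /nextc /upd /= ?(negbTE ki); apply: O1.
- move=> k sn0; case: (k =P i) => [->|/eqP ki] /=.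
    rewrite /c' /nextc /upd /= eqxx /=; apply: O2.
  rewrite /c' /nextc /upd /= ?(negbTE ki); apply: O2.
Qed.


Lemma In_map (A B : Type) (f : A -> B) s y : List.In y (map f s) ->
  exists2 x, List.In x s & y = f x.
Proof.
elim: s => //= a s IH [<-|/IH [x H1 H2]]; first by exists a; auto.
by exists x; auto.
Qed.

Lemma In_filter (A : Type) (P : pred A) s x : List.In x (filter P s) -> P x /\ List.In x s.
Proof.
elim: s => //= a s IH; case: ifP => Pa /=; first case=> [<-|/IH [H1 H2]]; auto.
by move/IH => [H1 H2]; auto.
Qed.

Lemma pmap_none (A B : Type) (f : A -> option B) s : (forall x, f x = None) -> pmap f s = [::].
Proof. by move=> H; elim: s => //= a s ->; rewrite H. Qed.

Lemma count_reads (P : pred msg) c i :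
  count P (mk_out c i [seq (j, MRead V) | j <- enum 'I_n & j != i]) =
  count (fun j => P (Msg (fresh c) i j (MRead V)) && (j != i)) (enum 'I_n).
Proof. by rewrite mk_out_count count_map (count_filter _ _ (enum 'I_n)). Qed.

Lemma inv_invoke_read c i : Inv c -> op (loc c i) = Idle ->
  Inv (nextc c i (LState (history (loc c i)) (w_sync (loc c i))
        (upd (r_sync (loc c i)) i (r_sync (loc c i) i).+1) (RWait1 (r_sync (loc c i) i).+1))
        (transit c) (pending c) [seq (j, MRead V) | j <- enum 'I_n & j != i]).
Proof.
move=> [] NT NP IV IU IL ID IB IR IHR O1 O2 Eop.
set out := [seq _ | j <- _ & _].
set c' := nextc _ _ _ _ _ _.
have Ews : ws c' = ws c.
  apply: functional_extensionality => p; apply: functional_extensionality => q.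
  by rewrite /ws /c' /nextc /upd /=; case: eqP => // ->.
have Ers : forall a b, rs c' a b = rs c a b + ((a == i) && (b == i)).
  move=> a b; rewrite /rs /c' /nextc /upd /=; case: (a =P i) => [->|] /=; last by rewrite addn0.
  by case: (b =P i) => [->|]; rewrite ?addn1 ?addn0.
have Ech : forall q p, chan c' q p = chan c q p.
  move=> q p; rewrite /chan /= pmap_cat mk_out_pmap.
  have -> : pmap (fun d => mbit q p (Msg (fresh c) i d.1 d.2)) out = [::].
    by rewrite /out pmap_map; apply: pmap_none => d; rewrite /mbit /=; case: ifP.
  by rewrite cats0.
have ESq : forall q p, Sq c' q p = Sq c q p by move=> q p; rewrite /Sq Ews Ech.
have Ecr : crashed c' = crashed c by [].
split; rewrite ?Ews ?ESq ?Ecr.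
- move=> m0 /= H; case: (List.in_app_or _ _ _ H); first exact: NT.
  move=> H2; case: (in_mk_out H2) => -> [d H3 [-> _]].
  case: (In_map H3) => j H4 ->; case: (In_filter H4) => ji _ /=.
  by rewrite eq_sym.
- exact: NP.
- exact: IV.
- by move=> q p qp cq; rewrite ESq; apply: IU.
- by move=> q p qp cq; rewrite ESq; apply: IL.
- by move=> q p qp cq; rewrite ESq; apply: ID.
- by move=> q p qp cq; rewrite Ech; apply: IB.
- move=> a b ab ca cb; rewrite !Ers andbb -(IR a b ab ca cb) /Rtok Ers /= !count_cat /out !count_reads.
  rewrite [count (fun j => isProc b a _ && _) _](eq_count (a2 := pred0)) ?count_pred0; last first.
    by move=> j; rewrite /isProc /= andbF.
  rewrite (eq_count (a2 := fun j => (j == b) && ((i == a) && (j != i)))); last first.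
    by move=> j; rewrite /isRead /= andbT; case: (j == b); case: (i == a).
  rewrite count_enum1.
  case: (a =P i) => [Ea|/eqP ai].
    rewrite Ea eqxx /= (_ : (b == i) = false); first by lia.
    by apply/negbTE; rewrite -Ea eq_sym.
  have ia : (i == a) = false by rewrite eq_sym (negbTE ai).
  rewrite ?(negbTE ai) ia /= ?andbF; lia.
- move=> h0 sn0 H1 H2; exact: IHR H1 H2.
- move=> k rsn; rewrite Ers; case: (k =P i) => [->|/eqP ki] /=.
    by rewrite /c' /nextc /upd /= ?eqxx /= => -[<-]; rewrite ?eqxx addn1.
  rewrite ?(negbTE ki) /= ?addn0 /c' /nextc /upd /= ?(negbTE ki); apply: O1.
- move=> k sn0; case: (k =P i) => [->|/eqP ki] /=.
    by rewrite /c' /nextc /upd /= ?eqxx.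
  rewrite /c' /nextc /upd /= ?(negbTE ki); apply: O2.
Qed.


Lemma sender_adopt c i p (W' : 'I_n -> nat) (ob : seq nat) :
  Inv c -> ~~ crashed c i -> p != i ->
  W' i = (ws c i i).+1 ->
  (W' p = ws c i p \/ (W' p = (ws c i i).+1 /\ ws c i p = ws c i i)) ->
  ob = (if ws c i p == ws c i i then [:: (ws c i i).+1 %% 2] else [::]) ->
  Sq c i p + size ob <= W' i /\ W' p <= Sq c i p + size ob /\
  (W' p < W' i -> Sq c i p + size ob = (W' p).+1) /\
  perm_eq (chan c i p ++ ob) (expct (ws c p i) (size (chan c i p ++ ob))).
Proof.
move=> [] NT NP IV IU IL ID IB IR IHR O1 O2 ci pi Wi Wp ->.
have ip : i != p by rewrite eq_sym.
have U := IU _ _ ip ci; have L := IL _ _ ip ci; have B := IB _ _ ip ci.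
have Vp := IV i p.
case: eqP => [E|/eqP NE] /=.
  have Es : Sq c i p = ws c i i by apply/eqP; rewrite eqn_leq U -{1}E L.
  rewrite Es addn1 Wi; split=> //; split.
    by case: Wp => [->|[-> _]]; rewrite ?E ?leqnSn.
  split; first by case: Wp => [->|[-> _]]; rewrite ?E ?ltnn.
  rewrite size_cat /= addn1 expct_rcons; apply: perm_cat => //.
  by move: Es; rewrite /Sq addnS => ->.
case: Wp => [Wp|[_ E]]; last by rewrite E eqxx in NE.
have lt : ws c i p < ws c i i by rewrite ltn_neqAle NE Vp.
have Es := ID _ _ ip ci lt.
rewrite addn0 Wp Wi Es; split; first by rewrite ltnS ltnW.
split=> //; split=> //; by rewrite cats0.
Qed.


Lemma pmap_cond (A : Type) (C : pred A) (bb : nat) s :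
  pmap (fun x => if C x then Some bb else None) s = nseq (count C s) bb.
Proof. by elim: s => //= a s ->; case: (C a). Qed.

Lemma obits_bcast p (P : pred 'I_n) bb (vv : V) :
  obits p [seq (l, MWrite bb vv) | l <- enum 'I_n & P l] = if P p then [:: bb] else [::].
Proof.
rewrite /obits pmap_map /=.
rewrite pmap_cond (count_filter _ _ (enum 'I_n)).
rewrite (eq_count (a2 := fun j => (j == p) && P j)) // count_enum1.
by case: (P p).
Qed.

Lemma ew_cases ls i j (v : V) : j != i -> w_sync ls j <= w_sync ls i ->
  let res := exec_write ls i j v in
  [/\ r_sync res.1 = r_sync ls, op res.1 = op ls,
      forall q, q != i -> q != j -> w_sync res.1 q = w_sync ls q,
      w_sync res.1 j = (w_sync ls j).+1 &
   [\/ [/\ w_sync ls j = w_sync ls i, w_sync res.1 i = (w_sync ls i).+1 &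
          forall p, p != i -> obits p res.2 =
            if w_sync ls p == w_sync ls i then [:: (w_sync ls i).+1 %% 2] else [::]],
       [/\ (w_sync ls j).+1 < w_sync ls i, w_sync res.1 i = w_sync ls i &
          forall p, p != i -> obits p res.2 = if p == j then [:: (w_sync ls j).+2 %% 2] else [::]] |
       [/\ (w_sync ls j).+1 = w_sync ls i, w_sync res.1 i = w_sync ls i & res.2 = [::]]]].
Proof.
move=> ji le res; rewrite /res /exec_write.
have ij : (i == j) = false by rewrite eq_sym (negbTE ji).
case: ifP => [/eqP/succn_inj E|E1]; last case: ifP => E2.
- rewrite /= /upd !eqxx ij; split=> //.
  + by move=> q qi qj; rewrite (negbTE qi) (negbTE qj).
  + constructor 1; split; rewrite ?E // => p pi.
    by rewrite obits_bcast /= (negbTE pi).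
- rewrite /= /upd !eqxx ij; split=> //.
  + by move=> q qi qj; rewrite (negbTE qj).
  + constructor 2; split=> // p pi; rewrite /obits /=.
    by case: (j =P p) => [->|/eqP jp]; rewrite ?eqxx // eq_sym (negbTE jp).
- rewrite /= /upd !eqxx ij; split=> //.
  + by move=> q qi qj; rewrite (negbTE qj).
  + constructor 3; split=> //; move: E1 E2 le; rewrite eqSS; lia.
Qed.

Lemma ew_out (ls : lstate V n) (i j : 'I_n) (v : V) (d : 'I_n * body V) : j != i -> List.In d (exec_write ls i j v).2 ->
  d.1 != i /\ exists (bb : nat) (vv : V), d.2 = MWrite bb vv.
Proof.
move=> ji; rewrite /exec_write.
case: ifP => [/eqP E|_]; last case: ifP => _ /=.
- move=> H0; case: (In_map H0) => l H1 ->; case: (In_filter H1) => H _ /=.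
  split; last by eexists; eexists.
  apply/eqP => li; move: H; rewrite li /upd eqxx /=; lia.
- by case=> // <- /=; split=> //; eexists; eexists.
- by [].
Qed.


Lemma count_zero_In (A : Type) (P : pred A) s : (forall x, List.In x s -> ~~ P x) -> count P s = 0.
Proof.
elim: s => //= a s IH H; rewrite IH; last by move=> x Hx; apply: H; right.
by rewrite (negbTE (H a (or_introl erefl))).
Qed.

Lemma sub_pending (l1 l2 : seq handler) h h0 : List.In h0 (l1 ++ l2) -> List.In h0 (l1 ++ h :: l2).
Proof.
move=> H; apply: List.in_or_app; case: (List.in_app_or _ _ _ H) => H2; auto; by right; right.
Qed.

Lemma inv_exec_write c i j hid (v : V) l1 l2 : Inv c -> ~~ crashed c i ->
  pending c = l1 ++ Handler hid i j (HWrite ((w_sync (loc c i) j).+1 %% 2) v) :: l2 ->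
  Inv (nextc c i (exec_write (loc c i) i j v).1 (transit c) (l1 ++ l2)
          (exec_write (loc c i) i j v).2).
Proof.
move=> Hinv ci Ep; have [NT NP IV IU IL ID IB IR IHR O1 O2] := Hinv.
pose b0 := (w_sync (loc c i) j).+1 %% 2.
pose h := Handler hid i j (HWrite b0 v).
have Hh : List.In h (pending c) by rewrite Ep; apply: List.in_or_app; right; left.
have ji : j != i by rewrite eq_sym; exact: (NP _ Hh).
have le := IV i j.
have Hact : act c i (exec_write (loc c i) i j v).1 (transit c) (l1 ++ l2)
          (exec_write (loc c i) i j v).2 by apply: A_exec_write; first exact: Ep.
have [Er Eo Eq Ej Hbr] := @ew_cases (loc c i) i j v ji le.
move: Hact Er Eo Eq Ej Hbr.
set ls' := (exec_write _ _ _ _).1; set out := (exec_write _ _ _ _).2 => Hact Er Eo Eq Ej Hbr.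
set c' := nextc _ _ _ _ _ _.
have Hout := @ew_out (loc c i) i j v _ ji; rewrite -/out in Hout.
have Hwo : forall p q, p != i -> ws c' p q = ws c p q by move=> p q; apply: ws_next_other.
have Hwi : forall q, ws c' i q = w_sync ls' q by move=> q; apply: ws_next_self.
rewrite /ws in le.
have Hown : ws c i i <= w_sync ls' i by case: Hbr => [][] _ -> //.
have HVi : forall q, w_sync ls' q <= w_sync ls' i.
  move=> q; case: (q =P i) => [->//|/eqP qi]; case: (q =P j) => [->|/eqP qj].
    by rewrite Ej; case: Hbr => [][E -> _] //; rewrite ?E // ltnW.
  by rewrite Eq //; apply: leq_trans (IV i q) Hown.
have Hchji : perm_eq (chan c j i) (b0 :: chan c' j i).
  rewrite /chan /= Ep !pmap_cat mk_out_pmap /=.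
  have -> : pmap (fun d => mbit j i (Msg (fresh c) i d.1 d.2)) out = [::].
    by apply: pmap_none => d; rewrite /mbit /= eq_sym (negbTE ji).
  have -> : hbit j i h = Some b0 by rewrite /hbit /= !eqxx.
  rewrite cats0 /=; apply/permP => x; rewrite !count_cat /= !count_cat; lia.
have Hchqi : forall q, q != i -> q != j -> chan c' q i = chan c q i.
  move=> q qi qj; rewrite /chan /= Ep !pmap_cat mk_out_pmap /=.
  have -> : pmap (fun d => mbit q i (Msg (fresh c) i d.1 d.2)) out = [::].
    by apply: pmap_none => d; rewrite /mbit /= eq_sym (negbTE qi).
  have -> : hbit q i h = None by rewrite /hbit /= eq_sym (negbTE qj) andbF.
  by rewrite cats0.
have Hszji : size (chan c j i) = (size (chan c' j i)).+1 by rewrite (perm_size Hchji).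
have Hsend : forall p, p != i -> Sq c' i p = Sq c i p + size (obits p out).
  move=> p pi; rewrite /Sq Hwo // (perm_size (chan_send Hact pi)) size_cat addnA //.
have Hpair : forall q p, q != p ->
  [/\ (~~ crashed c' q -> Sq c' q p <= ws c' q q), (~~ crashed c' q -> ws c' q p <= Sq c' q p),
      (~~ crashed c' q -> ws c' q p < ws c' q q -> Sq c' q p = (ws c' q p).+1) &
      (~~ crashed c' q -> perm_eq (chan c' q p) (expct (ws c' p q) (size (chan c' q p))))].
  move=> q p qp; case: (q =P i) => [Eqi|/eqP qi].
  -
    subst q; have pi : p != i by rewrite eq_sym.
    have Bs : perm_eq (chan c' i p) (chan c i p ++ obits p out) := chan_send Hact pi.
    rewrite Hsend // !Hwi Hwo // (perm_size Bs).
    have U := IU _ _ qp ci; have L := IL _ _ qp ci; have B := IB _ _ qp ci.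
    have Dd := ID _ _ qp ci.
    case: Hbr => [[E1 E2 E3]|[E1 E2 E3]|[E1 E2 E3]].
    + have W'p : w_sync ls' p = ws c i p \/ (w_sync ls' p = (ws c i i).+1 /\ ws c i p = ws c i i).
        case: (p =P j) => [->|/eqP pj]; last by left; rewrite Eq.
        by right; rewrite Ej; split; rewrite /ws ?E1.
      have [A1 [A2 [A3 A4]]] := sender_adopt (W' := w_sync ls') Hinv ci pi E2 W'p (E3 p pi).
      split; [move=> _; exact: A1 | move=> _; exact: A2 | move=> _; exact: A3 | move=> _; exact: perm_trans Bs A4].
    + rewrite E2 E3 //; case: (p =P j) => [Epj|/eqP pj] /=.
      * subst p; rewrite Ej.
        have Es : Sq c i j = (ws c i j).+1 by apply: Dd; rewrite /ws; apply: ltnW.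
        rewrite Es /ws addn1; split=> // _.
        apply: perm_trans Bs _; rewrite size_cat /= addn1 expct_rcons.
        apply: perm_cat; first exact: B.
        by rewrite (E3 _ pi) eqxx; move: Es; rewrite /Sq /ws addnS => ->.
      * rewrite Eq // addn0; split=> // _.
        rewrite cats0; apply: perm_trans Bs _.
        by rewrite (E3 _ pi) (negbTE pj) cats0.
    + rewrite E3 /obits /= cats0 in Bs.
      rewrite E2 E3 /obits /= addn0; case: (p =P j) => [Epj|/eqP pj] /=.
      * subst p; rewrite Ej.
        have Es : Sq c i j = (ws c i j).+1 by apply: Dd; rewrite /ws -E1.
        rewrite Es /ws E1; split=> // _; first by rewrite ltnn.
        by apply: perm_trans Bs _; rewrite !cats0.
      * rewrite Eq //; split=> // _.
        by apply: perm_trans Bs _; rewrite !cats0.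
  - case: (p =P i) => [Epi|/eqP pi].
    +
      subst p; rewrite !(Hwo q) //; case: (q =P j) => [Eqj|/eqP qj].
      * subst q; rewrite Hwi Ej.
        have HSq : Sq c' j i = Sq c j i by rewrite /Sq Hwi Ej Hszji addnS.
        rewrite HSq; split; [exact: IU|exact: IL|exact: ID|].
        move=> cq; have B := IB _ _ qp cq; rewrite Hszji /= in B.
        rewrite perm_sym in Hchji.
        rewrite -(perm_cons b0); apply: perm_trans Hchji _.
        by apply: perm_trans B _; rewrite /b0 /ws.
      * rewrite Hwi Eq // Hchqi //.
        have HSq : Sq c' q i = Sq c q i by rewrite /Sq Hwi Eq // Hchqi.
        rewrite HSq; split; [exact: IU|exact: IL|exact: ID|exact: IB].
    + have HSq : Sq c' q p = Sq c q p by rewrite /Sq Hwo // (chan_other Hact pi qi).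
      rewrite !Hwo // HSq (chan_other Hact pi qi).
      split; [exact: IU|exact: IL|exact: ID|exact: IB].
have Ers : forall a b, rs c' a b = rs c a b.
  move=> a b; rewrite /rs /c' /nextc /upd /=; case: (a =P i) => [->|//].
  by rewrite Er.
have Hsub := @sub_pending l1 l2 h.
split.
- move=> m /= H; case: (List.in_app_or _ _ _ H); first exact: NT.
  move=> H2; case: (in_mk_out H2) => -> [d H3 [-> _]].
  by case: (Hout _ H3); rewrite eq_sym.
- by move=> h0 /= /Hsub; rewrite -Ep; apply: NP.
- move=> p q; case: (p =P i) => [->|/eqP pi]; first by rewrite !Hwi.
  by rewrite !Hwo //; apply: IV.
- by move=> q p qp; case: (Hpair q p qp).
- by move=> q p qp; case: (Hpair q p qp).
- by move=> q p qp; case: (Hpair q p qp).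
- by move=> q p qp; case: (Hpair q p qp).
- move=> a b ab ca cb; rewrite Ers -(IR a b ab ca cb) /Rtok Ers /= Ep !count_cat /=.
  rewrite !mk_out_count.
  have Z : forall (P : pred msg), (forall bb vv m, m_body m = MWrite bb vv -> ~~ P m) ->
      count (fun d => P (Msg (fresh c) i d.1 d.2)) out = 0.
    move=> P HP; apply: count_zero_In => d Hd; case: (Hout _ Hd) => _ [bb [vv E]].
    by apply: (HP bb vv); rewrite /= E.
  rewrite !Z; try by move=> bb vv m E; rewrite /isProc /isRead E andbF.
  have -> : isHProc a b h = false by rewrite /isHProc /= andbF.
  have -> : isHRead b a h = false by rewrite /isHRead /= andbF.
  lia.
- move=> h0 sn /= /Hsub; rewrite -Ep => H1 H2; apply: leq_trans (IHR _ _ H1 H2) _.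
  case: (h_owner h0 =P i) => [->|/eqP oi]; first by rewrite Hwi.
  by rewrite Hwo.
- move=> k rsn; case: (k =P i) => [->|/eqP ki].
    by rewrite /c' loc_next_self Eo Ers; apply: O1.
  by rewrite /c' loc_next_other // Ers; apply: O1.
- move=> k sn; case: (k =P i) => [->|/eqP ki].
    rewrite /c' loc_next_self Eo ws_next_self => H; apply: leq_trans (O2 _ _ H) Hown.
  by rewrite /c' loc_next_other // ws_next_other //; apply: O2.
Qed.


Lemma inv_invoke_write c (v : V) : Inv c -> ~~ crashed c w -> op (loc c w) = Idle ->
  let ls := loc c w in
  let wsn := (w_sync ls w).+1 in
  let ws' := upd (w_sync ls) w wsn in
  Inv (nextc c w (LState (updh (history ls) wsn v) ws' (r_sync ls) (WWait wsn))
          (transit c) (pending c)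
          [seq (j, MWrite (wsn %% 2) v) | j <- enum 'I_n & ws' j == wsn.-1]).
Proof.
move=> Hinv ci Eop ls wsn ws'; have [NT NP IV IU IL ID IB IR IHR O1 O2] := Hinv.
have Hact : act c w (LState (updh (history ls) wsn v) ws' (r_sync ls) (WWait wsn))
          (transit c) (pending c)
          [seq (j, MWrite (wsn %% 2) v) | j <- enum 'I_n & ws' j == wsn.-1].
  exact: A_invoke_write.
move: Hact; set ls' := LState _ _ _ _; set out := [seq _ | j <- _ & _] => Hact.
set c' := nextc _ _ _ _ _ _.
have Hwo : forall p q, p != w -> ws c' p q = ws c p q by move=> p q; apply: ws_next_other.
have Hwi : forall q, ws c' w q = ws' q by move=> q; apply: ws_next_self.
have Ew'w : ws' w = (ws c w w).+1 by rewrite /ws' /upd eqxx.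
have Ew'o : forall q, q != w -> ws' q = ws c w q by move=> q qw; rewrite /ws' /upd (negbTE qw).
have Hout : forall d, List.In d out -> d.1 != w /\ exists (bb : nat) (vv : V), d.2 = MWrite bb vv.
  move=> d H0; case: (In_map H0) => l H1 ->; case: (In_filter H1) => H _ /=.
  split; last by eexists; eexists.
  apply/eqP => lw; move: H; rewrite lw Ew'w /= /ls /ws; lia.
have Hchqw : forall q, q != w -> chan c' q w = chan c q w.
  move=> q qw; rewrite /chan /= !pmap_cat mk_out_pmap /=.
  have -> : pmap (fun d => mbit q w (Msg (fresh c) w d.1 d.2)) out = [::].
    by apply: pmap_none => d; rewrite /mbit /= eq_sym (negbTE qw).
  by rewrite cats0.
have Hpair : forall q p, q != p ->
  [/\ (~~ crashed c' q -> Sq c' q p <= ws c' q q), (~~ crashed c' q -> ws c' q p <= Sq c' q p),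
      (~~ crashed c' q -> ws c' q p < ws c' q q -> Sq c' q p = (ws c' q p).+1) &
      (~~ crashed c' q -> perm_eq (chan c' q p) (expct (ws c' p q) (size (chan c' q p))))].
  move=> q p qp; case: (q =P w) => [Eqw|/eqP qw].
  - subst q; have pw : p != w by rewrite eq_sym.
    have Bs : perm_eq (chan c' w p) (chan c w p ++ obits p out) := chan_send Hact pw.
    have Ob : obits p out = if ws c w p == ws c w w then [:: (ws c w w).+1 %% 2] else [::].
      by rewrite /out obits_bcast Ew'o.
    have W'p : ws' p = ws c w p \/ (ws' p = (ws c w w).+1 /\ ws c w p = ws c w w).
      by left; apply: Ew'o.
    have [A1 [A2 [A3 A4]]] := sender_adopt (W' := ws') Hinv ci pw Ew'w W'p Ob.
    have Esq : Sq c' w p = Sq c w p + size (obits p out).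
      by rewrite /Sq Hwo // (perm_size Bs) size_cat addnA.
    rewrite Esq !Hwi Hwo //; split; [move=> _; exact: A1 | move=> _; exact: A2 | move=> _; exact: A3 |].
    by move=> _; rewrite (perm_size Bs); exact: perm_trans Bs A4.
  - case: (p =P w) => [Epw|/eqP pw].
    + subst p; rewrite !(Hwo q) // Hwi Ew'o // Hchqw //.
      have HSq : Sq c' q w = Sq c q w by rewrite /Sq Hwi Ew'o // Hchqw.
      rewrite HSq; split; [exact: IU|exact: IL|exact: ID|exact: IB].
    + have HSq : Sq c' q p = Sq c q p by rewrite /Sq Hwo // (chan_other Hact pw qw).
      rewrite !Hwo // HSq (chan_other Hact pw qw).
      split; [exact: IU|exact: IL|exact: ID|exact: IB].
have Ers : forall a b, rs c' a b = rs c a b.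
  by move=> a b; rewrite /rs /c' /nextc /upd /=; case: (a =P w) => [->|].
split.
- move=> m /= H; case: (List.in_app_or _ _ _ H); first exact: NT.
  move=> H2; case: (in_mk_out H2) => -> [d H3 [-> _]].
  by case: (Hout _ H3); rewrite eq_sym.
- exact: NP.
- move=> p q; case: (p =P w) => [->|/eqP pw]; last by rewrite !Hwo //; apply: IV.
  rewrite !Hwi Ew'w; case: (q =P w) => [->|/eqP qw]; first by rewrite Ew'w.
  by rewrite Ew'o //; apply: leqW; apply: IV.
- by move=> q p qp; case: (Hpair q p qp).
- by move=> q p qp; case: (Hpair q p qp).
- by move=> q p qp; case: (Hpair q p qp).
- by move=> q p qp; case: (Hpair q p qp).
- move=> a b ab ca cb; rewrite Ers -(IR a b ab ca cb) /Rtok Ers /= !count_cat !mk_out_count.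
  have Z : forall (P : pred msg), (forall bb vv m, m_body m = MWrite bb vv -> ~~ P m) ->
      count (fun d => P (Msg (fresh c) w d.1 d.2)) out = 0.
    move=> P HP; apply: count_zero_In => d Hd; case: (Hout _ Hd) => _ [bb [vv E]].
    by apply: (HP bb vv); rewrite /= E.
  rewrite !Z; try by move=> bb vv m E; rewrite /isProc /isRead E andbF.
  lia.
- move=> h0 sn H1 H2; apply: leq_trans (IHR _ _ H1 H2) _.
  case: (h_owner h0 =P w) => [->|/eqP oi]; last by rewrite Hwo.
  by rewrite Hwi Ew'w.
- move=> k rsn; case: (k =P w) => [->|/eqP ki].
    by rewrite /c' loc_next_self.
  by rewrite /c' loc_next_other // Ers; apply: O1.
- move=> k sn; case: (k =P w) => [->|/eqP ki].
    by rewrite /c' loc_next_self.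
  by rewrite /c' loc_next_other // ws_next_other //; apply: O2.
Qed.


Lemma inv_act c i ls' tr' pd' out : Inv c -> act c i ls' tr' pd' out -> ~~ crashed c i ->
  Inv (nextc c i ls' tr' pd' out).
Proof.
move=> H; case.
- move=> v Eop ls wsn ws' ci; have := inv_invoke_write v H ci Eop; by [].
- move=> i0 wsn ls Eop _ _; apply: inv_local => //.
- by move=> i0 ls Eop rsn _; apply: inv_invoke_read.
- move=> i0 rsn ls Eop _ _; apply: inv_local => // sn [<-]; by [].
- move=> i0 sn ls Eop _ _; apply: inv_local => //.
- by move=> i0 m l1 l2 Et Ed _; apply: inv_receive.
- move=> i0 j hid b v l1 l2 Ep Eb ci; subst b; exact: (inv_exec_write H ci Ep).
- by move=> i0 j hid sn l1 l2 Ep _ _; apply: inv_exec_read Ep.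
- by move=> i0 j hid l1 l2 Ep ls _; apply: inv_exec_proceed Ep.
Qed.

Lemma pmap_flt (U : Type) (f : msg -> option U) i s :
  (forall m, m_src m = i -> f m = None) -> pmap f s = pmap f [seq m <- s | m_src m != i].
Proof.
move=> H; elim: s => //= m s IH; case: (m_src m =P i) => [E|_] /=.
  by rewrite H.
by rewrite IH.
Qed.

Lemma count_flt (P : pred msg) i s :
  (forall m, m_src m = i -> ~~ P m) -> count P s = count P [seq m <- s | m_src m != i].
Proof.
move=> H; elim: s => //= m s IH; case: (m_src m =P i) => [E|_] /=.
  by rewrite (negbTE (H _ E)).
by rewrite IH.
Qed.

Lemma inv_crash c i T' : Inv c ->
  (forall m, List.In m T' -> List.In m (transit c)) ->
  [seq m <- T' | m_src m != i] = [seq m <- transit c | m_src m != i] ->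
  Inv (Config (loc c) (upd (crashed c) i true) T' (pending c) (fresh c)).
Proof.
move=> [] NT NP IV IU IL ID IB IR IHR O1 O2 Hsub Hflt.
set c' := Config _ _ _ _ _.
have Hcr : forall q, ~~ crashed c' q -> q != i /\ ~~ crashed c q.
  by move=> q; rewrite /c' /= /upd; case: eqP.
have Hch : forall q p, q != i -> chan c' q p = chan c q p.
  move=> q p qi; rewrite /chan /= (pmap_flt (i := i)) ?Hflt -?pmap_flt //.
    by move=> m E; rewrite /mbit E eq_sym (negbTE qi).
  by move=> m E; rewrite /mbit E eq_sym (negbTE qi).
have Hws : ws c' = ws c by [].
have HSq : forall q p, q != i -> Sq c' q p = Sq c q p by move=> q p qi; rewrite /Sq Hch.
split.
- by move=> m /Hsub; apply: NT.
- exact: NP.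
- exact: IV.
- by move=> q p qp /Hcr [qi cq]; rewrite HSq //; apply: IU.
- by move=> q p qp /Hcr [qi cq]; rewrite HSq //; apply: IL.
- by move=> q p qp /Hcr [qi cq]; rewrite HSq //; apply: ID.
- by move=> q p qp /Hcr [qi cq]; rewrite Hch //; apply: IB.
- move=> a b ab /Hcr [ai ca] /Hcr [bi cb]; change (Rtok c' a b = rs c a a).
  rewrite -(IR a b ab ca cb) /Rtok /=.
  rewrite (@count_flt (isProc b a) i T') ?Hflt -?count_flt; first last.
  - by move=> m E; rewrite /isProc E eq_sym (negbTE bi).
  - by move=> m E; rewrite /isProc E eq_sym (negbTE bi).
  rewrite (@count_flt (isRead a b) i T') ?Hflt -?count_flt; first last.
  - by move=> m E; rewrite /isRead E eq_sym (negbTE ai).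
  - by move=> m E; rewrite /isRead E eq_sym (negbTE ai).
  by [].
- exact: IHR.
- exact: O1.
- exact: O2.
Qed.

Lemma In_mask (A : Type) (m : bitseq) (s : seq A) x : List.In x (mask m s) -> List.In x s.
Proof.
elim: s m => [|a s IH] [|[] m] //= H; first by case: H => [->|/IH]; auto.
by right; apply: IH H.
Qed.

Lemma flt_mk_out (c : config) (i : 'I_n) (out : seq ('I_n * body V)) : [seq m <- mk_out c i out | m_src m != i] = [::].
Proof. by elim: out => //= d out IH; rewrite eqxx. Qed.

Lemma filter_nil_In (A : Type) (P : pred A) s : (forall x, List.In x s -> ~~ P x) -> filter P s = [::].
Proof.
elim: s => //= a s IH H; rewrite (negbTE (H a (or_introl erefl))) IH //.
by move=> x Hx; apply: H; right.
Qed.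

Lemma inv_step c c' : Inv c -> step t w c c' -> Inv c'.
Proof.
move=> H; case.
- move=> i ls' tr' pd' out ci A ->; exact: inv_act.
- move=> i ls' tr' pd' out msk ci A ->.
  have H1 := inv_act H A ci.
  have := inv_crash (i := i) (T' := tr' ++ mk_out c i (mask msk out)) H1.
  apply.
  + move=> m /= Hm; case: (List.in_app_or _ _ _ Hm) => H2; apply: List.in_or_app; auto.
    right; move: H2; rewrite /mk_out map_mask; exact: In_mask.
  + rewrite /= !filter_cat /mk_out map_mask.
    rewrite (_ : [seq m <- mask msk _ | m_src m != i] = [::]) -?/(mk_out c i out) ?(flt_mk_out c i out) //.
    apply: filter_nil_In => m Hm0; have Hm := In_mask Hm0.
    by case: (in_mk_out Hm) => ->; rewrite eqxx.
- move=> i ci ->.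
  have := inv_crash (i := i) (T' := transit c) H; apply => //.
Qed.

Lemma inv_init (v0 : V) : Inv (init_config n v0).
Proof.
by split=> //= *; rewrite /Sq /chan /ws /Rtok /rs.
Qed.

End S.


Section L.
Variables (V : Type) (n t : nat) (w : 'I_n).
Local Notation config := (config V n).
Local Notation msg := (msg V n).
Local Notation handler := (handler V n).
Local Notation act := (act t w).
Local Notation step := (step t w).

Lemma act_ws_mono (c : config) (i : 'I_n) (ls' : lstate V n) (tr' : seq msg) (pd' : seq handler) (out : seq ('I_n * body V)) q : act c i ls' tr' pd' out ->
  w_sync (loc c i) q <= w_sync ls' q.
Proof.
case=> //=.
- move=> v _; rewrite /upd /=; case: (q =P w) => [->|_] /=; lia.
- move=> i0 j hid b v l1 l2 _ _; rewrite /exec_write.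
  case: ifP => [/eqP E|_]; last case: ifP => _ /=; rewrite /upd /=.
  + case: (q =P j) => [->|_] /=; first lia.
    case: (q =P i0) => [->|_] /=; lia.
  + case: (q =P j) => [->|_] /=; lia.
  + case: (q =P j) => [->|_] /=; lia.
Qed.

Lemma act_rs_mono (c : config) (i : 'I_n) (ls' : lstate V n) (tr' : seq msg) (pd' : seq handler) (out : seq ('I_n * body V)) q : act c i ls' tr' pd' out ->
  r_sync (loc c i) q <= r_sync ls' q.
Proof.
case=> /=; intros; rewrite ?/upd /=; try lia.
- by case: (q =P i0) => [->|_] /=; lia.
- by rewrite /exec_write; case: ifP => _; last case: ifP => _.
- by case: (q =P j) => [->|_] /=; lia.
Qed.

Lemma step_ws_mono (c c' : config) p q : step c c' -> ws c p q <= ws c' p q.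
Proof.
case.
- move=> i ls' tr' pd' out _ A ->; rewrite /ws /upd /=; case: eqP => [->|//].
  exact: act_ws_mono A.
- move=> i ls' tr' pd' out msk _ A ->; rewrite /ws /upd /=; case: eqP => [->|//].
  exact: act_ws_mono A.
- by move=> i _ ->.
Qed.

Lemma step_rs_mono (c c' : config) p q : step c c' -> rs c p q <= rs c' p q.
Proof.
case.
- move=> i ls' tr' pd' out _ A ->; rewrite /rs /upd /=; case: eqP => [->|//].
  exact: act_rs_mono A.
- move=> i ls' tr' pd' out msk _ A ->; rewrite /rs /upd /=; case: eqP => [->|//].
  exact: act_rs_mono A.
- by move=> i _ ->.
Qed.

Lemma step_crash_mono (c c' : config) p : step c c' -> crashed c p -> crashed c' p.
Proof.
case.
- by move=> i ls' tr' pd' out _ A ->.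
- by move=> i ls' tr' pd' out msk _ A -> /=; rewrite /upd; case: eqP.
- by move=> i _ -> /=; rewrite /upd; case: eqP.
Qed.

Lemma In_split (A : Type) (x y : A) l1 l2 : List.In x (l1 ++ y :: l2) -> ~ List.In x (l1 ++ l2) -> x = y.
Proof.
move=> H1 H2; case: (List.in_app_or _ _ _ H1) => [H|[<-//|H]]; case: H2; apply: List.in_or_app; auto.
Qed.

Lemma act_transit_leave (c : config) (i : 'I_n) (ls' : lstate V n) (tr' : seq msg) (pd' : seq handler) (out : seq ('I_n * body V)) m : act c i ls' tr' pd' out ->
  List.In m (transit c) -> ~ List.In m tr' ->
  exists ls, List.In (Handler (m_id m) (m_dst m) (m_src m) (kind_of ls (m_dst m) (m_body m))) pd'.
Proof.
case; try by move=> *; exfalso; auto.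
move=> i0 m0 l1 l2 Et Ed H1 H2; rewrite Et in H1; have E := In_split H1 H2; subst m0.
exists (loc c i0); rewrite Ed; apply: List.in_or_app; right; left; done.
Qed.

Lemma step_transit_leave (c c' : config) m : step c c' ->
  List.In m (transit c) -> ~ List.In m (transit c') ->
  exists ls, List.In (Handler (m_id m) (m_dst m) (m_src m) (kind_of ls (m_dst m) (m_body m))) (pending c').
Proof.
case.
- move=> i ls' tr' pd' out _ A -> H1 H2 /=; apply: (act_transit_leave A H1).
  by move=> H; apply: H2; apply: List.in_or_app; left.
- move=> i ls' tr' pd' out msk _ A -> H1 H2 /=; apply: (act_transit_leave A H1).
  by move=> H; apply: H2; apply: List.in_or_app; left.
- by move=> i _ -> H1 H2; exfalso; auto.
Qed.

Definition heffect (c c' : config) (h : handler) : Prop :=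
  match h_kind h with
  | HWrite _ _ => ws c' (h_owner h) (h_from h) = (ws c (h_owner h) (h_from h)).+1
  | HRead _ => exists2 m, List.In m (transit c') &
      [/\ m_src m = h_owner h, m_dst m = h_from h & m_body m = MProceed V]
  | HProceed => rs c' (h_owner h) (h_from h) = (rs c (h_owner h) (h_from h)).+1
  end.

Lemma act_pending_leave (c : config) (i : 'I_n) (ls' : lstate V n) (tr' : seq msg) (pd' : seq handler) (out : seq ('I_n * body V)) h : act c i ls' tr' pd' out ->
  List.In h (pending c) -> ~ List.In h pd' ->
  h_owner h = i /\
  match h_kind h with
  | HWrite _ _ => w_sync ls' (h_from h) = (w_sync (loc c i) (h_from h)).+1
  | HRead _ => List.In (h_from h, MProceed V) out
  | HProceed => r_sync ls' (h_from h) = (r_sync (loc c i) (h_from h)).+1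
  end.
Proof.
case; try (by move=> *; exfalso; auto).
- move=> i0 m l1 l2 Et Ed H1 H2; exfalso; apply: H2; apply: List.in_or_app; auto.
- move=> i0 j hid b v l1 l2 Ep _ H1 H2; rewrite Ep in H1; have E := In_split H1 H2; subst h.
  split=> //=; rewrite /exec_write.
  by case: ifP => [/eqP E|_]; last case: ifP => _ /=; rewrite /upd /= eqxx.
- move=> i0 j hid sn l1 l2 Ep _ H1 H2; rewrite Ep in H1; have E := In_split H1 H2; subst h.
  by split=> //=; left.
- move=> i0 j hid l1 l2 Ep ls H1 H2; rewrite Ep in H1; have E := In_split H1 H2; subst h.
  by split=> //=; rewrite /upd /= eqxx.
Qed.

Lemma In_mk_out_intro (c : config) (i : 'I_n) (out : seq ('I_n * body V)) d :
  List.In d out -> List.In (Msg (fresh c) i d.1 d.2) (mk_out c i out).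
Proof. by rewrite /mk_out; elim: out => //= d0 out IH [<-|/IH]; auto. Qed.

Lemma step_pending_leave (c c' : config) h : step c c' ->
  List.In h (pending c) -> ~ List.In h (pending c') -> ~~ crashed c' (h_owner h) ->
  heffect c c' h.
Proof.
case.
- move=> i ls' tr' pd' out _ A -> H1 H2 /= _.
  have [Eo E] := act_pending_leave A H1 H2.
  rewrite /heffect; move: E; case: (h_kind h) => [b v|sn|].
  + by rewrite /ws /upd /= Eo eqxx.
  + move=> Hin; exists (Msg (fresh c) i (h_from h) (MProceed V)); last by split.
    apply: List.in_or_app; right.
    exact: (In_mk_out_intro c i Hin).
  + by rewrite /rs /upd /= Eo eqxx.
- move=> i ls' tr' pd' out msk _ A -> H1 H2 /=.
  have [Eo _] := act_pending_leave A H1 H2.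
  by rewrite Eo /upd eqxx.
- by move=> i _ -> H1 H2; exfalso; auto.
Qed.


Lemma first_leave (P : nat -> Prop) k k' : k <= k' -> P k -> ~ P k' ->
  exists2 k'', k <= k'' < k' & P k'' /\ ~ P k''.+1.
Proof.
elim: k' => [|k' IH] le Pk nP.
  by move: le; rewrite leqn0 => /eqP E; subst k.
case: (leqP k k') => [le'|lt].
  case: (classic (P k')) => H.
    by exists k'; [rewrite le' ltnSn|].
  by have [k'' /andP [a b] c] := IH le' Pk H; exists k''; [rewrite a ltnW|].
have E : k = k'.+1 by apply/eqP; rewrite eqn_leq le lt.
by subst k.
Qed.

Section Run.
Variables (v0 : V) (r : nat -> config).
Hypothesis Hrun : is_run t w v0 r.
Hypothesis Hfair : fair t r.

Lemma run_step k : step (r k) (r k.+1) \/ r k.+1 = r k.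
Proof. by case: Hrun => _ H; apply: H. Qed.

Lemma run_inv k : Inv (r k).
Proof.
elim: k => [|k IH]; first by case: Hrun => -> _; apply: inv_init.
by case: (run_step k) => [S|->] //; apply: inv_step S.
Qed.

Lemma mono_gen (f : nat -> nat) : (forall k, f k <= f k.+1) -> forall k k', k <= k' -> f k <= f k'.
Proof.
move=> H k k'; elim: k' => [|k' IH]; first by rewrite leqn0 => /eqP ->.
rewrite leq_eqVlt => /orP [/eqP ->//|lt]; apply: leq_trans (IH lt) (H _).
Qed.

Lemma ws_mono p q k k' : k <= k' -> ws (r k) p q <= ws (r k') p q.
Proof.
apply: (mono_gen (f := fun k => ws (r k) p q)) => k0.
by case: (run_step k0) => [S|->] //; apply: step_ws_mono.
Qed.

Lemma rs_mono p q k k' : k <= k' -> rs (r k) p q <= rs (r k') p q.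
Proof.
apply: (mono_gen (f := fun k => rs (r k) p q)) => k0.
by case: (run_step k0) => [S|->] //; apply: step_rs_mono.
Qed.

Lemma crash_mono p k k' : k <= k' -> crashed (r k) p -> crashed (r k') p.
Proof.
move=> le H; elim: k' le => [|k' IH]; first by rewrite leqn0 => /eqP <-.
rewrite leq_eqVlt => /orP [/eqP <-//|lt]; have H1 := IH lt.
by case: (run_step k') => [S|->] //; apply: step_crash_mono S H1.
Qed.

Lemma msg_delivered k m : List.In m (transit (r k)) -> correct r (m_dst m) ->
  exists k' ls, k <= k' /\
    List.In (Handler (m_id m) (m_dst m) (m_src m) (kind_of ls (m_dst m) (m_body m))) (pending (r k')).
Proof.
move=> Hm Hc; case: Hfair => Frel _.
have [k2 le2 nIn] := Frel _ _ Hm Hc.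
have [k'' /andP [a b] [c d]] := first_leave (P := fun x => List.In m (transit (r x))) le2 Hm nIn.
case: (run_step k'') => [S|E]; last by rewrite E in d.
have [ls H] := step_transit_leave S c d.
by exists k''.+1, ls; split=> //; apply: leq_trans a (leqnSn _).
Qed.

Lemma handler_done k h : List.In h (pending (r k)) -> correct r (h_owner h) ->
  (exists k0, forall k', k0 <= k' -> List.In h (pending (r k')) -> h_enabled (r k') h) ->
  exists2 k', k <= k' & heffect (r k') (r k'.+1) h.
Proof.
move=> Hh Hc [k0 Hen]; case: Hfair => _ [Fh _].
have [k2 le2 nIn] : exists2 k2, maxn k k0 <= k2 & ~ List.In h (pending (r k2)).
  apply: NNPP => H; apply: (Fh (maxn k k0) h Hc) => k' le'.
  have Hin : List.In h (pending (r k')).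
    by apply: NNPP => H2; apply: H; exists k'.
  split=> //; apply: Hen => //; apply: leq_trans le'; exact: leq_maxr.
have lek : k <= k2 by apply: leq_trans le2; exact: leq_maxl.
have [k'' /andP [a b] [c d]] := first_leave (P := fun x => List.In h (pending (r x))) lek Hh nIn.
case: (run_step k'') => [S|E]; last by rewrite E in d.
by exists k'' => //; apply: step_pending_leave S c d _; apply: Hc.
Qed.


Lemma in_pmap_ex (A : Type) (f : A -> option nat) s (x : nat) :
  x \in pmap f s -> exists y, List.In y s /\ f y = Some x.
Proof.
elim: s => //= a s IH; case E: (f a) => [y|] /=; last first.
  by move/IH => [z [H1 H2]]; exists z; split; auto.
rewrite in_cons => /orP [/eqP ->|/IH [z [H1 H2]]]; first by exists a; split; auto.
by exists z; split; auto.
Qed.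

Lemma mbit_some q p (m : msg) x : mbit q p m = Some x ->
  [/\ m_src m = q, m_dst m = p & exists vv, m_body m = MWrite x vv].
Proof.
rewrite /mbit; case: (m_src m =P q) => // -> ; case: (m_dst m =P p) => // -> /=.
by case: (m_body m) => // b vv [<-]; split=> //; exists vv.
Qed.

Lemma hbit_some q p (h : handler) x : hbit q p h = Some x ->
  [/\ h_owner h = p, h_from h = q & exists vv, h_kind h = HWrite x vv].
Proof.
rewrite /hbit; case: (h_owner h =P p) => // -> ; case: (h_from h =P q) => // -> /=.
by case: (h_kind h) => // b vv [<-]; split=> //; exists vv.
Qed.

Lemma write_progress p q T : q != p -> correct r p -> correct r q ->
  0 < size (chan (r T) q p) -> exists2 T', T <= T' & ws (r T) p q < ws (r T') p q.
Proof.
move=> qp cp cq sz; set v := ws (r T) p q.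
apply: NNPP => Hno.
have Hle : forall T', T <= T' -> ws (r T') p q = v.
  move=> T' le; apply/eqP; rewrite eqn_leq (ws_mono p q le) andbT leqNgt.
  by apply/negP => H; apply: Hno; exists T'.
have HB := iB (run_inv T) qp (cq T).
have Hmem : v.+1 %% 2 \in chan (r T) q p.
  rewrite (perm_mem HB); move: sz; case: (size _) => //= s _.
  by rewrite in_cons eqxx.
have Hdone : forall T1 (h : handler) vv, T <= T1 -> List.In h (pending (r T1)) ->
    h_owner h = p -> h_from h = q -> h_kind h = HWrite (v.+1 %% 2) vv -> False.
  move=> T1 h vv le Hh Eo Ef Ek.
  have [k' le' Heff] : exists2 k', T1 <= k' & heffect (r k') (r k'.+1) h.
    apply: handler_done => //; first by rewrite Eo.
    exists T1 => k' le2 _; rewrite /h_enabled Ek Eo Ef.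
    by rewrite -/(ws (r k') p q) Hle ?(leq_trans le).
  move: Heff; rewrite /heffect Ek Eo Ef Hle ?Hle //; last by apply: leq_trans le (leq_trans le' _).
    by move=> /eqP; rewrite ltn_eqF.
  by apply: leq_trans le le'.
have [[m [Hm E]]|[h [Hh E]]] : (exists m, List.In m (transit (r T)) /\ mbit q p m = Some (v.+1 %% 2)) \/
    (exists h, List.In h (pending (r T)) /\ hbit q p h = Some (v.+1 %% 2)).
- move: Hmem; rewrite /chan mem_cat => /orP [/in_pmap_ex H|/in_pmap_ex H]; by [left|right].
- have [Es Ed [vv Eb]] := mbit_some E.
  have cd : correct r (m_dst m) by rewrite Ed.
  have [T1 [ls [le H1]]] := msg_delivered Hm cd.
  by apply: (Hdone T1 _ vv le H1) => //=; rewrite Eb.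
- have [Eo Ef [vv Ek]] := hbit_some E.
  exact: (Hdone T _ vv (leqnn _) Hh Eo Ef Ek).
Qed.


Lemma learn1 p q T : q != p -> correct r p -> correct r q ->
  ws (r T) p q < ws (r T) p p -> exists T', ws (r T) p q < ws (r T') p q.
Proof.
move=> qp cp cq lt; set v := ws (r T) p q.
have pq : p != q by rewrite eq_sym.
have Sub : forall d T', T <= T' -> v.+1 - ws (r T') q p <= d ->
    exists2 T1, T <= T1 & v < ws (r T1) q p \/ v < ws (r T1) p q.
  elim=> [|d IH] T' le Hd.
    by exists T' => //; left; move: Hd; rewrite leqn0 subn_eq0.
  case: (ltnP v (ws (r T') p q)) => [H|H]; first by exists T' => //; right.
  case: (ltnP v (ws (r T') q p)) => [H2|H2]; first by exists T' => //; left.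
  have Ev : ws (r T') p q = v by apply/eqP; rewrite eqn_leq H (ws_mono p q le).
  have ltT' : ws (r T') p q < ws (r T') p p.
    by rewrite Ev; apply: leq_trans lt (ws_mono p p le).
  have HD := iD (run_inv T') pq (cp T') ltT'.
  have sz : 0 < size (chan (r T') p q).
    by move: HD; rewrite /Sq Ev => HD; move: H2; lia.
  have [T'' le'' gt] := write_progress pq cq cp sz.
  apply: (IH T''); first by apply: leq_trans le le''.
  by move: Hd gt; lia.
have [T1 le1 [H|H]] := Sub (v.+1 - ws (r T) q p) T (leqnn _) (leqnn _); last by exists T1.
case: (ltnP v (ws (r T1) p q)) => [H2|H2]; first by exists T1.
have Ev : ws (r T1) p q = v by apply/eqP; rewrite eqn_leq H2 (ws_mono p q le1).
have HL := iL (run_inv T1) qp (cq T1).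
have sz : 0 < size (chan (r T1) q p) by move: HL; rewrite /Sq Ev; move: H; lia.
have [T2 le2 gt] := write_progress qp cp cq sz.
by exists T2; rewrite -Ev.
Qed.

Lemma learn p q : q != p -> correct r p -> correct r q ->
  forall x T, x <= ws (r T) p p -> exists T', x <= ws (r T') p q.
Proof.
move=> qp cp cq x; have : forall d T, x - ws (r T) p q <= d -> x <= ws (r T) p p ->
    exists T', x <= ws (r T') p q.
  elim=> [|d IH] T Hd Hx; first by exists T; move: Hd; rewrite leqn0 subn_eq0.
  case: (leqP x (ws (r T) p q)) => [H|H]; first by exists T.
  have lt : ws (r T) p q < ws (r T) p p by apply: leq_trans H Hx.
  have [T' gt] := learn1 qp cp cq lt.
  case: (leqP T T') => [le|lt'].
    apply: (IH T'); first by move: Hd gt; lia.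
    by apply: leq_trans Hx (ws_mono p p le).
  have := ws_mono p q (ltnW lt'); move: gt; lia.
by move=> H T; apply: H (leqnn _).
Qed.


Lemma count_pos_ex (A : Type) (P : pred A) s : 0 < count P s -> exists x, List.In x s /\ P x.
Proof.
elim: s => //= a s IH; case Pa: (P a) => /=; first by exists a; split; auto.
by move/IH => [x [H1 H2]]; exists x; split; auto.
Qed.

Lemma stage_hproc T (h : handler) i j : List.In h (pending (r T)) -> h_owner h = i -> h_from h = j ->
  h_kind h = HProceed V -> correct r i -> exists T', rs (r T) i j < rs (r T') i j.
Proof.
move=> Hh Eo Ef Ek ci.
have [k' le' Heff] : exists2 k', T <= k' & heffect (r k') (r k'.+1) h.
  apply: handler_done => //; first by rewrite Eo.
  by exists 0 => k' _ _; rewrite /h_enabled Ek.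
exists k'.+1; move: Heff; rewrite /heffect Ek Eo Ef => ->.
by rewrite ltnS; apply: rs_mono.
Qed.

Lemma stage_proc T (m : msg) i j : List.In m (transit (r T)) -> isProc j i m ->
  correct r i -> exists T', rs (r T) i j < rs (r T') i j.
Proof.
move=> Hm /andP [/andP [/eqP Es /eqP Ed] Eb] ci.
have cd : correct r (m_dst m) by rewrite Ed.
have [T1 [ls [le H1]]] := msg_delivered Hm cd.
move: H1; case E: (m_body m) Eb => // _ H1.
have [T' gt] := stage_hproc H1 Ed Es erefl ci.
exists T'; apply: leq_trans gt; rewrite ltnS; exact: rs_mono.
Qed.

Lemma stage_hread T (h : handler) i j sn : List.In h (pending (r T)) -> h_owner h = j -> h_from h = i ->
  h_kind h = HRead V sn -> i != j -> correct r i -> correct r j ->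
  exists T', rs (r T) i j < rs (r T') i j.
Proof.
move=> Hh Eo Ef Ek ij ci cj.
have Hsn := iHR (run_inv T) Hh Ek; rewrite Eo in Hsn.
have [T0 H0] := learn ij cj ci Hsn.
have [k' le' Heff] : exists2 k', T <= k' & heffect (r k') (r k'.+1) h.
  apply: handler_done => //; first by rewrite Eo.
  exists T0 => k' le _; rewrite /h_enabled Ek Eo Ef.
  by apply: leq_trans H0 (ws_mono j i le).
move: Heff; rewrite /heffect Ek Eo Ef => -[m Hm [Es Ed Eb]].
have Hp : isProc j i m by rewrite /isProc Es Ed Eb !eqxx.
have [T' gt] := stage_proc Hm Hp ci.
exists T'; apply: leq_trans gt; rewrite ltnS; apply: rs_mono; exact: leq_trans le' (leqnSn _).
Qed.

Lemma stage_read T (m : msg) i j : List.In m (transit (r T)) -> isRead i j m ->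
  i != j -> correct r i -> correct r j -> exists T', rs (r T) i j < rs (r T') i j.
Proof.
move=> Hm /andP [/andP [/eqP Es /eqP Ed] Eb] ij ci cj.
have cd : correct r (m_dst m) by rewrite Ed.
have [T1 [ls [le H1]]] := msg_delivered Hm cd.
move: H1; case E: (m_body m) Eb => // _ H1.
have [T' gt] := stage_hread H1 Ed Es erefl ij ci cj.
exists T'; apply: leq_trans gt; rewrite ltnS; exact: rs_mono.
Qed.

Lemma read_progress T i j : i != j -> correct r i -> correct r j ->
  rs (r T) i j < rs (r T) i i -> exists T', rs (r T) i j < rs (r T') i j.
Proof.
move=> ij ci cj lt.
have HR := iR (run_inv T) ij (ci T) (cj T).
move: HR; rewrite /Rtok => HR.
have : 0 < count (isProc j i) (transit (r T)) \/ 0 < count (isHProc i j) (pending (r T)) \/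
       0 < count (isRead i j) (transit (r T)) \/ 0 < count (isHRead j i) (pending (r T)).
  move: lt; rewrite -HR; lia.
case=> [/count_pos_ex [m [H1 H2]]|[/count_pos_ex [h [H1 H2]]|[/count_pos_ex [m [H1 H2]]|/count_pos_ex [h [H1 H2]]]]].
- exact: stage_proc H1 H2 ci.
- move: H2 => /andP [/andP [/eqP Eo /eqP Ef] Ek].
  move: Ek; case E: (h_kind h) => // _.
  exact: stage_hproc H1 Eo Ef E ci.
- exact: stage_read H1 H2 ij ci cj.
- move: H2 => /andP [/andP [/eqP Eo /eqP Ef] Ek].
  move: Ek; case E: (h_kind h) => [b v|sn|] // _.
  exact: stage_hread H1 Eo Ef E ij ci cj.
Qed.

End Run.
End L.


Section M.
Variables (V : Type) (n t : nat) (w : 'I_n).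
Local Notation config := (config V n).
Local Notation act := (act t w).
Local Notation step := (step t w).

Lemma op_ew (ls : lstate V n) i j (v : V) : op (exec_write ls i j v).1 = op ls.
Proof. by rewrite /exec_write; case: ifP => _ //; case: ifP. Qed.

Lemma op_act (c : config) i ls' tr' pd' out p : act c i ls' tr' pd' out ->
  op (loc (nextc c i ls' tr' pd' out) p) = op (loc c p) \/
  op (loc (nextc c i ls' tr' pd' out) p) = Idle \/ op (loc c p) = Idle \/
  (exists wsn, op (loc c p) = WWait wsn) \/
  (exists rsn0, op (loc c p) = RWait1 rsn0 /\ exists sn, op (loc (nextc c i ls' tr' pd' out) p) = RWait2 sn).
Proof.
case: (p =P i) => [->|/eqP pi]; last by left; rewrite loc_next_other.
rewrite loc_next_self; case.
- by move=> v E *; right; right; left.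
- by move=> i0 wsn ls E *; right; right; right; left; exists wsn.
- by move=> i0 ls E *; right; right; left.
- by move=> i0 rsn ls E *; right; right; right; right; exists rsn; split=> //; eexists.
- by move=> i0 sn ls E *; right; left.
- by move=> *; left.
- by move=> *; left; rewrite op_ew.
- by move=> *; left.
- by move=> *; left.
Qed.

Lemma op_step (c c' : config) p : step c c' ->
  op (loc c' p) = op (loc c p) \/ op (loc c' p) = Idle \/ op (loc c p) = Idle \/
  (exists wsn, op (loc c p) = WWait wsn) \/
  (exists rsn0, op (loc c p) = RWait1 rsn0 /\ exists sn, op (loc c' p) = RWait2 sn).
Proof.
case.
- move=> i ls' tr' pd' out _ A ->; exact: (op_act p A).
- move=> i ls' tr' pd' out msk _ A ->; exact: (op_act p A).
- by move=> i _ ->; left.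
Qed.

Lemma fin_bound (P : 'I_n -> nat -> Prop) :
  (forall j, exists k, P j k) -> (forall j k k', k <= k' -> P j k -> P j k') ->
  exists K, forall j, P j K.
Proof.
move=> Hex Hup.
have : forall s : seq 'I_n, exists K, forall j, j \in s -> P j K.
  elim=> [|a s [K HK]]; first by exists 0.
  have [ka Ha] := Hex a; exists (maxn K ka) => j; rewrite in_cons => /orP [/eqP ->|Hj].
    by apply: Hup Ha; apply: leq_maxr.
  by apply: Hup (HK _ Hj); apply: leq_maxl.
move=> /(_ (enum 'I_n)) [K HK]; exists K => j; apply: HK; by rewrite mem_enum.
Qed.

End M.


Theorem lemma9 (V : Type) (n t : nat) (w : 'I_n) (v0 : V) (r : nat -> config V n) :
  2 * t < n ->
  is_run t w v0 r -> at_most_t_crash t r -> fair t r ->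
  forall (i : 'I_n) (k : nat),
    op (loc (r k) i) = Idle ->
    (exists rsn, op (loc (r k.+1) i) = RWait1 rsn) ->
    exists2 k', k < k' & (op (loc (r k') i) = Idle \/ crashed (r k') i).
Proof.
move=> _ Hrun Hcr Hfair i k Eidle [rsn E1].
have crashed_ex : forall j, ~ correct r j -> exists k0, crashed (r k0) j.
  move=> j nc; apply: NNPP => H; apply: nc => k0; apply/negP => Hc; apply: H; by exists k0.
case: (classic (correct r i)) => [ci|nci]; last first.
  have [k0 Hk0] := crashed_ex _ nci.
  exists (maxn k0 k.+1); first by rewrite leq_max leqnn orbT.
  by right; apply: (crash_mono Hrun) Hk0; exact: leq_maxl.
apply: NNPP => Hno.
have NI : forall k', k < k' -> op (loc (r k') i) <> Idle.
  by move=> k' lt E; apply: Hno; exists k'; auto.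
have Hop : forall k', k < k' -> op (loc (r k') i) = RWait1 rsn \/ exists sn, op (loc (r k') i) = RWait2 sn.
  elim=> // k' IH; rewrite ltnS leq_eqVlt => /orP [/eqP <-|lt']; first by left.
  have NIk' := NI _ lt'; have NIk'' := NI k'.+1 (leqW lt').
  have H := IH lt'.
  case: (run_step Hrun k') => [S|->] //.
  case: (op_step i S) => [E|[E|[E|[[wsn Ew]|[rsn0 [_ [sn Esn]]]]]]]; first by rewrite E.
  - by [].
  - by [].
  - by case: H => [|[sn]]; rewrite Ew.
  - by right; exists sn.
have Hop2 : forall K sn, k < K -> op (loc (r K) i) = RWait2 sn ->
    forall k', K <= k' -> op (loc (r k') i) = RWait2 sn.
  move=> K sn lt EK; elim=> [|k' IH]; first by rewrite leqn0 => /eqP <-.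
  rewrite leq_eqVlt => /orP [/eqP <-//|lt']; have H := IH lt'.
  have NIk'' := NI k'.+1 (leq_trans lt (leqW lt')).
  case: (run_step Hrun k') => [S|->] //.
  case: (op_step i S) => [E|[E|[E|[[wsn E]|[rsn0 [E _]]]]]]; first by rewrite E H.
  - by [].
  - by rewrite H in E.
  - by rewrite H in E.
  - by rewrite H in E.
have [K0 HK0] : exists K0, forall j, ~ correct r j -> crashed (r K0) j.
  apply: (fin_bound (P := fun j K => ~ correct r j -> crashed (r K) j)).
  - move=> j; case: (classic (correct r j)) => [cj|ncj]; first by exists 0.
    by have [k0 Hk0] := crashed_ex _ ncj; exists k0.
  - by move=> j k1 k2 le H nc; apply: (crash_mono Hrun) le (H nc).
set C := [set j | ~~ crashed (r K0) j].
have HC : forall j, j \in C -> correct r j.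
  move=> j; rewrite inE => Hj; apply: NNPP => nc; by rewrite (HK0 _ nc) in Hj.
have cardC : n - t <= #|C|.
  have E : ~: [set j | crashed (r K0) j] = C by apply/setP => j; rewrite !inE.
  have := cardsC [set j | crashed (r K0) j]; rewrite card_ord E.
  have := Hcr K0; lia.
have [_ [_ Fop]] := Hfair.
case: (classic (exists K, k < K /\ exists sn, op (loc (r K) i) = RWait2 sn)) => [[K [lt [sn EK]]]|nB].
- have Hst := Hop2 K sn lt EK.
  have snx : sn <= ws (r K) i i := iO2 (run_inv Hrun K) EK.
  have [K1 HK1] : exists K1, forall j, correct r j -> forall T', K1 <= T' -> sn <= ws (r T') i j.
    apply: (fin_bound (P := fun j T => correct r j -> forall T', T <= T' -> sn <= ws (r T') i j)).
    + move=> j; case: (j =P i) => [->|/eqP ji].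
        by exists K => _ T' le; apply: leq_trans snx (ws_mono Hrun i i le).
      case: (classic (correct r j)) => [cj|ncj]; last by exists 0.
      have [Tj HTj] := learn Hrun Hfair ji ci cj (leqnn (ws (r K) i i)).
      exists Tj => _ T' le; apply: leq_trans snx (leq_trans HTj _).
      exact (ws_mono Hrun i j le).
    + by move=> j k1 k2 le H cj T' le'; apply: H => //; apply: leq_trans le le'.
  apply: (Fop (maxn K1 K) i ci) => k' le.
  have leK : K <= k' by apply: leq_trans le; apply: leq_maxr.
  have leK1 : K1 <= k' by apply: leq_trans le; apply: leq_maxl.
  rewrite (Hst k'.+1 (leqW leK)) (Hst k' leK); split=> //.
  rewrite /op_enabled (Hst k' leK); apply: leq_trans cardC _.
  apply: subset_leq_card; apply/subsetP => j Hj; rewrite inE.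
  exact: HK1 (HC _ Hj) _ leK1.
- have HA : forall K, k < K -> op (loc (r K) i) = RWait1 rsn.
    move=> K lt; case: (Hop K lt) => // [[sn E]]; exfalso; apply: nB; exists K; split=> //.
    by exists sn.
  have Hr1 : forall T, k < T -> rs (r T) i i = rsn.
    by move=> T lt; apply: (iO1 (run_inv Hrun T)); apply: HA.
  have [K1 HK1] : exists K1, forall j, correct r j -> forall T', K1 <= T' -> rs (r T') i j = rsn.
    apply: (fin_bound (P := fun j T => correct r j -> forall T', T <= T' -> rs (r T') i j = rsn)).
    + move=> j; case: (j =P i) => [->|/eqP ji].
        by exists k.+1 => _ T' le; apply: Hr1.
      case: (classic (correct r j)) => [cj|ncj]; last by exists 0.
      have ij : i != j by rewrite eq_sym.
      have Hle : forall T, k < T -> rs (r T) i j <= rsn.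
        move=> T lt; have HR := iR (run_inv Hrun T) ij (ci T) (cj T).
        rewrite -(Hr1 T lt) -HR /Rtok; lia.
      have Hreach : forall d T, k < T -> rsn - rs (r T) i j <= d ->
          exists2 T', k < T' & rsn <= rs (r T') i j.
        elim=> [|d IH] T lt Hd; first by exists T => //; move: Hd; rewrite leqn0 subn_eq0.
        case: (leqP rsn (rs (r T) i j)) => [H|H]; first by exists T.
        have lt2 : rs (r T) i j < rs (r T) i i by rewrite Hr1.
        have [T' gt] := read_progress Hrun Hfair ij ci cj lt2.
        case: (leqP T T') => [le|lt'].
          apply: (IH T'); first by apply: leq_trans lt le.
          by move: Hd gt; lia.
        have := rs_mono Hrun i j (ltnW lt'); move: gt; lia.
      have [Tj ltj Hj] := Hreach _ k.+1 (ltnSn _) (leqnn _).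
      exists Tj => _ T' le; apply/eqP; rewrite eqn_leq Hle; last by apply: leq_trans ltj le.
      by apply: leq_trans Hj (rs_mono Hrun i j le).
    + by move=> j k1 k2 le H cj T' le'; apply: H => //; apply: leq_trans le le'.
  apply: (Fop (maxn K1 k.+1) i ci) => k' le.
  have leK : k < k' by apply: leq_trans le; apply: leq_maxr.
  have leK1 : K1 <= k' by apply: leq_trans le; apply: leq_maxl.
  rewrite (HA k'.+1 (leqW leK)) (HA k' leK); split=> //.
  rewrite /op_enabled (HA k' leK); apply: leq_trans cardC _.
  apply: subset_leq_card; apply/subsetP => j Hj; rewrite inE.
  by rewrite -/(rs (r k') i j) (HK1 _ (HC _ Hj) _ leK1).
Qed.
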